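(* Let $1<p<\infty$, let $\alpha\in SOS(\mathbb{R}_+)$ with exponent function $\omega$ (i.e. $\alpha(t)=te^{\omega(t)}$), let $\xi\in\Delta$, and let \[ \mathfrak a(t,x):=e^{i\omega(t)(x+i/p)}\big(r_p(x)\big)^2,\qquad (t,x)\in(\mathbb{R}_+\times\mathbb{R})\cup(\Delta\times\mathbb{R}). \] Then there exists a function $\mathfrak b_\xi\in\mathcal E(\mathbb{R}_+,V(\mathbb{R}))$ such that \[ \mathfrak a(t,x)-\mathfrak a(\xi,x)=\big(\omega(t)-\omega(\xi)\big)r_p(x)\mathfrak b_\xi(t,x)\quad\text{for all }(t,x)\in\mathbb{R}_+\times\mathbb{R}. \]
   Context: $\mathbb{R}_+=(0,\infty)$. $SO(\mathbb{R}_+)$: bounded continuous complex $f$ on $\mathbb{R}_+$ with $\lim_{r\to s}\sup\{|f(t)-f(\tau)|:t,\tau\in[\lambda r,r]\}=0$ for $s\in\{0,\infty\}$ and each (equivalently some) $\lambda\in(0,1)$. $\Delta$ is the set of characters $\xi$ of the C*-algebra $SO(\mathbb{R}_+)$ whose restriction to $C([0,\infty])$ is evaluation at $0$ or at $\infty$; $\omega(\xi):=\xi(\omega)$. $SOS(\mathbb{R}_+)$: orientation-preserving diffeomorphisms $\alpha$ of $\mathbb{R}_+$ onto itself with no fixed points in $\mathbb{R}_+$ such that $\log\alpha'$ is bounded continuous and $\alpha'\in SO(\mathbb{R}_+)$; the exponent function $\omega(t)=\log[\alpha(t)/t]$ is real-valued and in $SO(\mathbb{R}_+)$. $r_p(x)=1/\sinh[\pi(x+i/p)]$.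 $V(\mathbb{R})$: absolutely continuous functions of finite total variation on $\mathbb{R}$, norm $\|a\|_V=\|a\|_{L^\infty}+\int_{\mathbb{R}}|a'|$. $C_b(\mathbb{R}_+,V(\mathbb{R}))$: bounded continuous maps $t\mapsto\mathfrak a(t,\cdot)\in V(\mathbb{R})$, norm $\sup_t\|\mathfrak a(t,\cdot)\|_V$. $SO(\mathbb{R}_+,V(\mathbb{R}))$: those $\mathfrak a$ with $\lim_{r\to0}\operatorname{cm}^C_r(\mathfrak a)=\lim_{r\to\infty}\operatorname{cm}^C_r(\mathfrak a)=0$, $\operatorname{cm}^C_r(\mathfrak a)=\max\{\|\mathfrak a(t,\cdot)-\mathfrak a(\tau,\cdot)\|_{L^\infty(\mathbb{R})}:t,\tau\in[r,2r]\}$. $\mathcal E(\mathbb{R}_+,V(\mathbb{R}))$: those $\mathfrak a\in SO(\mathbb{R}_+,V(\mathbb{R}))$ with $\lim_{|h|\to0}\sup_{t\in\mathbb{R}_+}\|\mathfrak a(t,\cdot)-\mathfrak a(t,\cdot+h)\|_V=0$. *)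

(* Defs.v *)
From Stdlib Require Import Reals List.
From Coquelicot Require Import Coquelicot.
Import ListNotations.
Open Scope R_scope.

Definition Cexp (z : C) : C :=
  (exp (Re z) * cos (Im z), exp (Re z) * sin (Im z)).
Definition Csinh (z : C) : C := ((Cexp z - Cexp (- z)) / RtoC 2)%C.

Definition r_p (p x : R) : C :=
  Cinv (Csinh (RtoC PI * (RtoC x + Ci * RtoC (/ p))))%C.

(** a(w, x) = e^{i w (x + i/p)} (r_p x)^2, for a (possibly complex) value w of
    the exponent; a(t,x) = a_fun p (omega t) x and a(xi,x) = a_fun p (xi omega) x. *)
Definition a_fun (p : R) (w : C) (x : R) : C :=
  (Cexp (Ci * w * (RtoC x + Ci * RtoC (/ p))) * (r_p p x * r_p p x))%C.

(** ---------- SO(R_+) : complex functions on R, only values on (0,oo) matter *)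
Definition cont_on_Rp (f : R -> C) : Prop :=
  forall t, 0 < t -> forall eps, 0 < eps -> exists delta, 0 < delta /\
    forall s, 0 < s -> Rabs (s - t) < delta -> Cmod (f s - f t)%C < eps.

Definition bounded_on_Rp (f : R -> C) : Prop :=
  exists M, forall t, 0 < t -> Cmod (f t) <= M.

Definition SO (f : R -> C) : Prop :=
  bounded_on_Rp f /\ cont_on_Rp f /\
  (forall lam, 0 < lam < 1 -> forall eps, 0 < eps ->
     exists delta, 0 < delta /\ forall r, 0 < r < delta ->
       forall t tau, lam * r <= t <= r -> lam * r <= tau <= r ->
         Cmod (f t - f tau)%C <= eps) /\
  (forall lam, 0 < lam < 1 -> forall eps, 0 < eps ->
     exists N, forall r, N < r ->
       forall t tau, lam * r <= t <= r -> lam * r <= tau <= r ->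
         Cmod (f t - f tau)%C <= eps).

Definition lim_at_0 (f : R -> C) (L : C) : Prop :=
  forall eps, 0 < eps -> exists delta, 0 < delta /\
    forall t, 0 < t < delta -> Cmod (f t - L)%C < eps.
Definition lim_at_oo (f : R -> C) (L : C) : Prop :=
  forall eps, 0 < eps -> exists N, forall t, N < t -> Cmod (f t - L)%C < eps.

(** C([0,oo]) viewed inside SO(R_+): continuous on (0,oo) with finite limits at 0 and oo. *)
Definition C0oo (f : R -> C) : Prop :=
  cont_on_Rp f /\ (exists L0, lim_at_0 f L0) /\ (exists L1, lim_at_oo f L1).

(** Xi is given on all functions R -> C, but is only
    constrained (and meaningful) on SO(R_+), as a function of the restriction to (0,oo). *)
Definition character (Xi : (R -> C) -> C) : Prop :=
  (forall f g, SO f -> SO g -> (forall t, 0 < t -> f t = g t) -> Xi f = Xi g) /\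
  (forall f g, SO f -> SO g -> Xi (fun t => f t + g t)%C = (Xi f + Xi g)%C) /\
  (forall (c : C) f, SO f -> Xi (fun t => c * f t)%C = (c * Xi f)%C) /\
  (forall f g, SO f -> SO g -> Xi (fun t => f t * g t)%C = (Xi f * Xi g)%C) /\
  (exists f, SO f /\ Xi f <> RtoC 0).

Definition in_Delta (Xi : (R -> C) -> C) : Prop :=
  character Xi /\
  ((forall f L, C0oo f -> lim_at_0 f L -> Xi f = L) \/
   (forall f L, C0oo f -> lim_at_oo f L -> Xi f = L)).

Definition SOS (alpha : R -> R) : Prop :=
  (forall t, 0 < t -> 0 < alpha t) /\
  (exists beta : R -> R,
     (forall s, 0 < s -> 0 < beta s /\ alpha (beta s) = s) /\
     (forall t, 0 < t -> beta (alpha t) = t) /\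
     (forall s, 0 < s -> exists l, derivable_pt_lim beta s l)) /\
  (forall t, 0 < t -> alpha t <> t) /\
  (exists alpha' : R -> R,
     (forall t, 0 < t -> derivable_pt_lim alpha t (alpha' t) /\ 0 < alpha' t) /\
     (exists M, forall t, 0 < t -> Rabs (ln (alpha' t)) <= M) /\
     (forall t, 0 < t -> continuity_pt (fun s => ln (alpha' s)) t) /\
     SO (fun t => RtoC (alpha' t))).

Definition exponent (alpha : R -> R) (t : R) : R := ln (alpha t / t).

Fixpoint var_list (f : R -> C) (l : list R) : R :=
  match l with
  | x :: ((y :: _) as l') => Cmod (f y - f x)%C + var_list f l'
  | _ => 0
  end.

Fixpoint incr_list (l : list R) : Prop :=
  match l with
  | x :: ((y :: _) as l') => x <= y /\ incr_list l'
  | _ => True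
  end.

Fixpoint nonoverlap (l : list (R * R)) : Prop :=
  match l with
  | [] => True
  | (a, b) :: l' => a <= b /\
      (match l' with [] => True | (a', _) :: _ => b <= a' end) /\ nonoverlap l'
  end.

Fixpoint len_sum (l : list (R * R)) : R :=
  match l with [] => 0 | (a, b) :: l' => (b - a) + len_sum l' end.
Fixpoint incr_sum (f : R -> C) (l : list (R * R)) : R :=
  match l with [] => 0 | (a, b) :: l' => Cmod (f b - f a)%C + incr_sum f l' end.

Definition abs_continuous (f : R -> C) : Prop :=
  forall eps, 0 < eps -> exists delta, 0 < delta /\
    forall l, nonoverlap l -> len_sum l < delta -> incr_sum f l < eps.

Definition bounded_variation (f : R -> C) : Prop :=
  exists M, forall l, incr_list l -> var_list f l <= M.

Definition in_V (f : R -> C) : Prop := abs_continuous f /\ bounded_variation f.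

(* ||f||_V = ||f||_oo + V(f) <= M  (for f in V(R), int |f'| = total variation V(f)) *)
Definition Vnorm_le (f : R -> C) (M : R) : Prop :=
  forall x l, incr_list l -> Cmod (f x) + var_list f l <= M.

Definition supnorm_le (f : R -> C) (M : R) : Prop :=
  forall x, Cmod (f x) <= M.

Definition Cb_V (b : R -> R -> C) : Prop :=
  (forall t, 0 < t -> in_V (b t)) /\
  (exists M, forall t, 0 < t -> Vnorm_le (b t) M) /\
  (forall t, 0 < t -> forall eps, 0 < eps -> exists delta, 0 < delta /\
     forall tau, 0 < tau -> Rabs (tau - t) < delta ->
       Vnorm_le (fun x => b tau x - b t x)%C eps).

Definition SO_V (b : R -> R -> C) : Prop :=
  Cb_V b /\
  (forall eps, 0 < eps -> exists delta, 0 < delta /\ forall r, 0 < r < delta ->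
     forall t tau, r <= t <= 2 * r -> r <= tau <= 2 * r ->
       supnorm_le (fun x => b t x - b tau x)%C eps) /\
  (forall eps, 0 < eps -> exists N, forall r, N < r ->
     forall t tau, r <= t <= 2 * r -> r <= tau <= 2 * r ->
       supnorm_le (fun x => b t x - b tau x)%C eps).

Definition E_V (b : R -> R -> C) : Prop :=
  SO_V b /\
  (forall eps, 0 < eps -> exists delta, 0 < delta /\ forall h, Rabs h < delta ->
     forall t, 0 < t -> Vnorm_le (fun x => Cminus (b t x) (b t (x + h))) eps).

(* Main.v *)
Require Import Defs.
From Stdlib Require Import Reals Lra Lia List FunctionalExtensionality.
From Coquelicot Require Import Coquelicot.
Import ListNotations.
Open Scope R_scope.

Lemma dl_ext (f g : R -> R) x l l' :
  (forall y, f y = g y) -> l = l' -> derivable_pt_lim f x l -> derivable_pt_lim g x l'.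
Proof. intros H1 H2 H. replace g with f by (apply functional_extensionality; auto). now subst. Qed.

Lemma dmult (f g : R -> R) x df dg : derivable_pt_lim f x df -> derivable_pt_lim g x dg ->
  derivable_pt_lim (fun y => f y * g y) x (df * g x + f x * dg).
Proof. intros; exact (derivable_pt_lim_mult _ _ _ _ _ H H0). Qed.
Lemma dplus (f g : R -> R) x df dg : derivable_pt_lim f x df -> derivable_pt_lim g x dg ->
  derivable_pt_lim (fun y => f y + g y) x (df + dg).
Proof. intros; exact (derivable_pt_lim_plus _ _ _ _ _ H H0). Qed.
Lemma dminus (f g : R -> R) x df dg : derivable_pt_lim f x df -> derivable_pt_lim g x dg ->
  derivable_pt_lim (fun y => f y - g y) x (df - dg).
Proof. intros; exact (derivable_pt_lim_minus _ _ _ _ _ H H0). Qed.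
Lemma dcomp (f g : R -> R) x df dg : derivable_pt_lim g x dg -> derivable_pt_lim f (g x) df ->
  derivable_pt_lim (fun y => f (g y)) x (df * dg).
Proof. intros; exact (derivable_pt_lim_comp _ _ _ _ _ H H0). Qed.
Lemma dconst (a x : R) : derivable_pt_lim (fun _ => a) x 0.
Proof. exact (derivable_pt_lim_const a x). Qed.
Lemma did x : derivable_pt_lim (fun y => y) x 1.
Proof. exact (derivable_pt_lim_id x). Qed.

Lemma Cmod_le_sum (z : C) : Cmod z <= Rabs (fst z) + Rabs (snd z).
Proof.
  unfold Cmod. rewrite <- (sqrt_pow2 (Rabs (fst z) + Rabs (snd z))) by
    (pose proof (Rabs_pos (fst z)); pose proof (Rabs_pos (snd z)); lra).
  apply sqrt_le_1_alt. rewrite <- (pow2_abs (fst z)), <- (pow2_abs (snd z)).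
  pose proof (Rabs_pos (fst z)); pose proof (Rabs_pos (snd z)); nra.
Qed.

Lemma var_real (u u' : R -> R) B :
  (forall x, derivable_pt_lim u x (u' x)) -> (forall x, Rabs (u' x) <= B / (1 + x^2)) ->
  forall x y, x <= y -> Rabs (u y - u x) <= B * (atan y - atan x).
Proof.
  intros Hd Hb x y Hxy. destruct (Rle_lt_or_eq_dec _ _ Hxy) as [Hlt|Heq].
  2:{ subst. replace (u y - u y) with 0 by ring. rewrite Rabs_R0. lra. }
  assert (G1 := MVT_cor2 (fun t => B * atan t - u t) (fun t => B * / (1 + t^2) - u' t) x y Hlt).
  assert (G2 := MVT_cor2 (fun t => B * atan t + u t) (fun t => B * / (1 + t^2) + u' t) x y Hlt).
  destruct G1 as [c1 [E1 _]].
  { intros c _. apply dminus; [|apply Hd].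
    apply (dl_ext (fun t => B * atan t) _ _ (0 * atan c + B * / (1 + c^2))); auto; [ring|].
    apply dmult; [apply dconst|apply derivable_pt_lim_atan]. }
  destruct G2 as [c2 [E2 _]].
  { intros c _. apply dplus; [|apply Hd].
    apply (dl_ext (fun t => B * atan t) _ _ (0 * atan c + B * / (1 + c^2))); auto; [ring|].
    apply dmult; [apply dconst|apply derivable_pt_lim_atan]. }
  assert (P1: 0 <= B * / (1 + c1^2) - u' c1).
  { specialize (Hb c1). unfold Rdiv in Hb. apply Rabs_le_between in Hb. lra. }
  assert (P2: 0 <= B * / (1 + c2^2) + u' c2).
  { specialize (Hb c2). unfold Rdiv in Hb. apply Rabs_le_between in Hb. lra. }
  apply Rabs_le. split; nra.
Qed.

Lemma atan_lip x y : x <= y -> atan y - atan x <= y - x.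
Proof.
  intros Hxy. destruct (Rle_lt_or_eq_dec _ _ Hxy) as [Hlt|Heq]; [|subst; lra].
  destruct (MVT_cor2 atan (fun t => / (1 + t^2)) x y Hlt) as [c [E _]].
  { intros; apply derivable_pt_lim_atan. }
  rewrite E. assert (0 < 1 + c^2) by nra.
  assert (/ (1 + c^2) <= 1). { rewrite <- Rinv_1. apply Rinv_le_contravar; nra. }
  assert (0 <= / (1 + c^2)) by (apply Rlt_le, Rinv_0_lt_compat; lra). nra.
Qed.

Lemma atan_mono x y : x <= y -> atan x <= atan y.
Proof.
  intros H. destruct (Rle_lt_or_eq_dec _ _ H); [|subst; lra].
  left; apply atan_increasing; auto.
Qed.

Definition Good (f : R -> C) (A Cc : R) : Prop :=
  (forall x, Cmod (f x) <= A) /\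
  (forall x y, x <= y -> Cmod (f y - f x)%C <= Cc * (atan y - atan x)).

Lemma var_list_bound f A Cc : Good f A Cc -> 0 <= Cc ->
  forall l x, incr_list (x :: l) -> var_list f (x :: l) <= Cc * (PI/2 - atan x).
Proof.
  intros [_ HG] HC l. induction l as [|y l IH]; intros x Hi.
  - simpl. pose proof (atan_bound x). nra.
  - simpl in Hi. destruct Hi as [Hxy Hi].
    change (var_list f (x :: y :: l)) with (Cmod (f y - f x)%C + var_list f (y :: l)).
    specialize (IH y Hi). specialize (HG x y Hxy). nra.
Qed.

Lemma Good_Vnorm f A Cc : Good f A Cc -> 0 <= Cc -> Vnorm_le f (A + Cc * PI).
Proof.
  intros HG HC x l Hl. destruct HG as [H1 H2].
  assert (var_list f l <= Cc * PI).
  { destruct l as [|y l]. simpl. pose proof PI_RGT_0; nra.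
    pose proof (var_list_bound f A Cc (conj H1 H2) HC l y Hl). pose proof (atan_bound y). nra. }
  specialize (H1 x). lra.
Qed.

Lemma incr_sum_bound f A Cc : Good f A Cc -> 0 <= Cc ->
  forall l, nonoverlap l -> incr_sum f l <= Cc * len_sum l.
Proof.
  intros [_ HG] HC l. induction l as [|[a b] l IH]; intros Hn.
  - simpl; lra.
  - simpl in Hn. destruct Hn as [Hab [_ Hn]]. simpl.
    specialize (IH Hn). specialize (HG a b Hab). pose proof (atan_lip a b Hab). nra.
Qed.

Lemma Good_inV f A Cc : Good f A Cc -> 0 <= Cc -> in_V f.
Proof.
  intros HG HC. split.
  - intros eps Heps. exists (eps / (Cc + 1)). split. apply Rdiv_lt_0_compat; lra.
    intros l Hn Hl. pose proof (incr_sum_bound f A Cc HG HC l Hn).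
    assert (Cc * len_sum l <= Cc * (eps / (Cc+1))) by (apply Rmult_le_compat_l; lra).
    assert (Cc * (eps / (Cc+1)) < eps).
    { unfold Rdiv. rewrite <- Rmult_assoc. apply (Rmult_lt_reg_r (Cc+1)); [lra|].
      rewrite Rmult_assoc, Rinv_l by lra. nra. }
    lra.
  - exists (Cc * PI). intros l Hl. destruct l as [|y l]. simpl. pose proof PI_RGT_0; nra.
    pose proof (var_list_bound f A Cc HG HC l y Hl). pose proof (atan_bound y). nra.
Qed.

Lemma Good_deriv (f : R -> C) (u' v' : R -> R) A B :
  (forall x, derivable_pt_lim (fun y => fst (f y)) x (u' x)) ->
  (forall x, derivable_pt_lim (fun y => snd (f y)) x (v' x)) ->
  (forall x, Rabs (u' x) <= B / (1 + x^2)) -> (forall x, Rabs (v' x) <= B / (1 + x^2)) ->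
  (forall x, Rabs (fst (f x)) <= A) -> (forall x, Rabs (snd (f x)) <= A) ->
  Good f (2 * A) (2 * B).
Proof.
  intros Hu Hv Bu Bv Au Av. split.
  - intros x. pose proof (Cmod_le_sum (f x)). specialize (Au x); specialize (Av x). lra.
  - intros x y Hxy. eapply Rle_trans; [apply Cmod_le_sum|].
    pose proof (var_real _ _ B Hu Bu x y Hxy). pose proof (var_real _ _ B Hv Bv x y Hxy).
    replace (fst (f y - f x)%C) with (fst (f y) - fst (f x)) by (simpl; ring).
    replace (snd (f y - f x)%C) with (snd (f y) - snd (f x)) by (simpl; ring). lra.
Qed.

Definition CompOK (U V W : R -> R -> R) (K B : R) : Prop :=
  (forall s x, Rabs s <= K -> derivable_pt_lim (U s) x (V s x)) /\
  (forall s x, Rabs s <= K -> derivable_pt_lim (V s) x (W s x)) /\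
  (forall s x, Rabs s <= K -> Rabs (U s x) <= B) /\
  (forall s x, Rabs s <= K -> Rabs (V s x) <= B / (1 + x^2)) /\
  (forall s x, Rabs s <= K -> Rabs (W s x) <= B / (1 + x^2)) /\
  (forall s s' x, Rabs s <= K -> Rabs s' <= K -> Rabs (U s x - U s' x) <= B * Rabs (s - s')) /\
  (forall s s' x, Rabs s <= K -> Rabs s' <= K ->
     Rabs (V s x - V s' x) <= B * Rabs (s - s') / (1 + x^2)).

Lemma inv1x2_le1 x : / (1 + x^2) <= 1.
Proof. rewrite <- Rinv_1. apply Rinv_le_contravar; nra. Qed.
Lemma inv1x2_pos x : 0 < / (1 + x^2).
Proof. apply Rinv_0_lt_compat; nra. Qed.

Lemma shift_w x c : Rabs (c - x) <= 1 -> / (1 + c^2) <= 3 / (1 + x^2).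
Proof.
  intros H. apply Rabs_le_between in H. unfold Rdiv.
  apply (Rmult_le_reg_r ((1 + c^2) * (1 + x^2))). nra.
  replace (/ (1 + c ^ 2) * ((1 + c ^ 2) * (1 + x ^ 2))) with (1 + x^2) by (field; nra).
  replace (3 * / (1 + x ^ 2) * ((1 + c ^ 2) * (1 + x ^ 2))) with (3 * (1 + c^2)) by (field; nra).
  assert ((c-x)^2 <= 1) by nra. assert (0 <= (c - (x - c))^2) by apply pow2_ge_0. nra.
Qed.

Section Comp.
Variables (U V W : R -> R -> R) (K B : R).
Hypothesis H : CompOK U V W K B.

Lemma B_nonneg : 0 <= K -> 0 <= B.
Proof.
  intros HK. destruct H as [_ [_ [Hb _]]]. specialize (Hb 0 0). rewrite Rabs_R0 in Hb.
  specialize (Hb HK). pose proof (Rabs_pos (U 0 0)). lra.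
Qed.

Lemma comp_shift_val s x h : Rabs s <= K -> Rabs (U s x - U s (x + h)) <= B * Rabs h.
Proof.
  intros Hs. destruct H as [HdU [_ [_ [HbV _]]]].
  destruct (MVT_abs (U s) (V s) x (x + h)) as [c [E _]].
  { intros; apply HdU; auto. }
  rewrite <- Rabs_Ropp. replace (- (U s x - U s (x + h))) with (U s (x + h) - U s x) by ring.
  rewrite E. replace (x + h - x) with h by ring. apply Rmult_le_compat_r. apply Rabs_pos.
  eapply Rle_trans; [apply HbV; auto|]. unfold Rdiv.
  assert (0 <= B). { pose proof (HbV s c Hs). pose proof (Rabs_pos (V s c)).
    pose proof (inv1x2_pos c). unfold Rdiv in H0. nra. }
  pose proof (inv1x2_le1 c). nra.
Qed.

Lemma comp_shift_der s x h : Rabs s <= K -> Rabs h <= 1 ->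
  Rabs (V s x - V s (x + h)) <= 3 * B * Rabs h / (1 + x^2).
Proof.
  intros Hs Hh. destruct H as [_ [HdV [_ [_ [HbW _]]]]].
  destruct (MVT_abs (V s) (W s) x (x + h)) as [c [E Hc]].
  { intros; apply HdV; auto. }
  rewrite <- Rabs_Ropp. replace (- (V s x - V s (x + h))) with (V s (x + h) - V s x) by ring.
  rewrite E. replace (x + h - x) with h by ring.
  assert (Rabs (c - x) <= 1).
  { apply Rabs_le. destruct Hc as [Hc1 Hc2].
    apply Rabs_le_between in Hh.
    pose proof (Rmin_l x (x+h)); pose proof (Rmin_r x (x+h)); pose proof (Rmax_l x (x+h)); pose proof (Rmax_r x (x+h)).
    destruct (Rle_dec 0 h).
    - rewrite Rmin_left in Hc1 by lra; rewrite Rmax_right in Hc2 by lra; lra.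
    - rewrite Rmin_right in Hc1 by lra; rewrite Rmax_left in Hc2 by lra; lra. }
  pose proof (shift_w x c H0). specialize (HbW s c Hs).
  assert (0 <= B). { pose proof (Rabs_pos (W s c)). pose proof (inv1x2_pos c). unfold Rdiv in HbW. nra. }
  unfold Rdiv in *. pose proof (Rabs_pos h). pose proof (Rabs_pos (W s c)).
  assert (Rabs (W s c) <= B * (3 * / (1 + x ^ 2))) by nra.
  nra.
Qed.
End Comp.

Definition pairf (U1 U2 : R -> R -> R) (s x : R) : C := (U1 s x, U2 s x).

Section Pair.
Variables (U1 V1 W1 U2 V2 W2 : R -> R -> R) (K B : R).
Hypothesis H1 : CompOK U1 V1 W1 K B.
Hypothesis H2 : CompOK U2 V2 W2 K B.

Lemma pair_G1 s : Rabs s <= K -> Good (pairf U1 U2 s) (2 * B) (2 * B).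
Proof.
  intros Hs. destruct H1 as [d1 [_ [b1 [bv1 _]]]]. destruct H2 as [d2 [_ [b2 [bv2 _]]]].
  apply (Good_deriv _ (V1 s) (V2 s)); simpl; auto.
Qed.

Lemma pair_G2 s s' : Rabs s <= K -> Rabs s' <= K ->
  Good (fun x => pairf U1 U2 s x - pairf U1 U2 s' x)%C (2 * (B * Rabs (s - s'))) (2 * (B * Rabs (s - s'))).
Proof.
  intros Hs Hs'. destruct H1 as [d1 [_ [b1 [bv1 [_ [l1 lv1]]]]]]. destruct H2 as [d2 [_ [b2 [bv2 [_ [l2 lv2]]]]]].
  apply (Good_deriv _ (fun x => V1 s x - V1 s' x) (fun x => V2 s x - V2 s' x)); simpl.
  - intros x. apply (dl_ext (fun y => U1 s y - U1 s' y) _ _ (V1 s x - V1 s' x)); [intros; ring| reflexivity|]. apply dminus; auto.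
  - intros x. apply (dl_ext (fun y => U2 s y - U2 s' y) _ _ (V2 s x - V2 s' x)); [intros; ring| reflexivity|]. apply dminus; auto.
  - intros x. apply lv1; auto.
  - intros x. apply lv2; auto.
  - intros x. replace (U1 s x + - U1 s' x) with (U1 s x - U1 s' x) by ring. apply l1; auto.
  - intros x. replace (U2 s x + - U2 s' x) with (U2 s x - U2 s' x) by ring. apply l2; auto.
Qed.

Lemma pair_G3 s h : Rabs s <= K -> Rabs h <= 1 ->
  Good (fun x => pairf U1 U2 s x - pairf U1 U2 s (x + h))%C (2 * (B * Rabs h)) (2 * (3 * B * Rabs h)).
Proof.
  intros Hs Hh. pose proof (comp_shift_val _ _ _ _ _ H1 s) as sv1.
  pose proof (comp_shift_val _ _ _ _ _ H2 s) as sv2.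
  pose proof (comp_shift_der _ _ _ _ _ H1 s) as sd1.
  pose proof (comp_shift_der _ _ _ _ _ H2 s) as sd2.
  destruct H1 as [d1 _]. destruct H2 as [d2 _].
  apply (Good_deriv _ (fun x => V1 s x - V1 s (x + h)) (fun x => V2 s x - V2 s (x + h))); simpl.
  - intros x. apply (dl_ext (fun y => U1 s y - U1 s (y + h)) _ _ (V1 s x - V1 s (x+h))); [intros; ring| reflexivity|].
    apply dminus; auto. apply (dl_ext (fun y => U1 s (y + h)) _ _ (V1 s (x + h) * 1)); auto; [ring|].
    apply dcomp; [|apply d1; auto]. apply (dl_ext (fun y => y + h) _ _ (1 + 0)); auto; [ring|].
    apply dplus; [apply did|apply dconst].
  - intros x. apply (dl_ext (fun y => U2 s y - U2 s (y + h)) _ _ (V2 s x - V2 s (x+h))); [intros; ring| reflexivity|].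
    apply dminus; auto. apply (dl_ext (fun y => U2 s (y + h)) _ _ (V2 s (x + h) * 1)); auto; [ring|].
    apply dcomp; [|apply d2; auto]. apply (dl_ext (fun y => y + h) _ _ (1 + 0)); auto; [ring|].
    apply dplus; [apply did|apply dconst].
  - intros x. apply sd1; auto.
  - intros x. apply sd2; auto.
  - intros x. replace (U1 s x + - U1 s (x + h)) with (U1 s x - U1 s (x + h)) by ring. apply sv1; auto.
  - intros x. replace (U2 s x + - U2 s (x + h)) with (U2 s x - U2 s (x + h)) by ring. apply sv2; auto.
Qed.

Lemma pair_sup s s' x : Rabs s <= K -> Rabs s' <= K ->
  Cmod (pairf U1 U2 s x - pairf U1 U2 s' x)%C <= 2 * B * Rabs (s - s').
Proof.
  intros Hs Hs'. eapply Rle_trans; [apply Cmod_le_sum|]. simpl.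
  destruct H1 as [_ [_ [_ [_ [_ [l1 _]]]]]]. destruct H2 as [_ [_ [_ [_ [_ [l2 _]]]]]].
  replace (U1 s x + - U1 s' x) with (U1 s x - U1 s' x) by ring.
  replace (U2 s x + - U2 s' x) with (U2 s x - U2 s' x) by ring.
  pose proof (l1 s s' x Hs Hs'); pose proof (l2 s s' x Hs Hs'). lra.
Qed.
End Pair.

Definition DDr (w0 : R) (phi phi' : R -> R) (s : R) : R :=
  if Req_EM_T s w0 then phi' w0 else (phi s - phi w0) / (s - w0).

Definition betw a b c := Rmin a b <= c <= Rmax a b.

Lemma betw_K a b c K : Rabs a <= K -> Rabs b <= K -> betw a b c -> Rabs c <= K.
Proof.
  unfold betw; intros Ha Hb [H1 H2]. apply Rabs_le_between in Ha; apply Rabs_le_between in Hb.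
  apply Rabs_le. unfold Rmin, Rmax in *. destruct (Rle_dec a b); lra.
Qed.

Lemma betw_dist a b c : betw a b c -> Rabs (c - a) <= Rabs (b - a).
Proof.
  unfold betw, Rmin, Rmax; intros [H1 H2]. unfold Rabs.
  destruct (Rle_dec a b); destruct (Rcase_abs (c - a)); destruct (Rcase_abs (b - a)); lra.
Qed.

Lemma betw_sym a b c : betw a b c -> betw b a c.
Proof. unfold betw; rewrite Rmin_comm, Rmax_comm; auto. Qed.

Lemma mvt_signed (f f' : R -> R) a b :
  (forall c, betw a b c -> derivable_pt_lim f c (f' c)) ->
  exists c, betw a b c /\ f b - f a = f' c * (b - a).
Proof.
  intros Hd. destruct (Rtotal_order a b) as [Hlt|[Heq|Hgt]].
  - destruct (MVT_cor2 f f' a b Hlt) as [c [E Hc]].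
    { intros c Hc; apply Hd. unfold betw, Rmin, Rmax; destruct (Rle_dec a b); lra. }
    exists c; split; auto. unfold betw, Rmin, Rmax; destruct (Rle_dec a b); lra.
  - subst. exists b. split. unfold betw, Rmin, Rmax; destruct (Rle_dec b b); lra. ring.
  - destruct (MVT_cor2 f f' b a Hgt) as [c [E Hc]].
    { intros c Hc; apply Hd. unfold betw, Rmin, Rmax; destruct (Rle_dec a b); lra. }
    exists c; split. unfold betw, Rmin, Rmax; destruct (Rle_dec a b); lra. nra.
Qed.

Lemma lip_of_deriv (f f' : R -> R) a b M :
  (forall c, betw a b c -> derivable_pt_lim f c (f' c)) ->
  (forall c, betw a b c -> Rabs (f' c) <= M) ->
  Rabs (f b - f a) <= M * Rabs (b - a).
Proof.
  intros Hd Hb. destruct (mvt_signed f f' a b Hd) as [c [Hc E]]. rewrite E, Rabs_mult.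
  apply Rmult_le_compat_r; [apply Rabs_pos| auto].
Qed.

Section DD.
Variables (w0 K : R).
Hypothesis Hw0 : Rabs w0 <= K.

Lemma DD_bound (phi phi' : R -> R) M s :
  (forall c, Rabs c <= K -> derivable_pt_lim phi c (phi' c)) ->
  (forall c, Rabs c <= K -> Rabs (phi' c) <= M) -> Rabs s <= K ->
  Rabs (DDr w0 phi phi' s) <= M.
Proof.
  intros Hd Hb Hs. unfold DDr. destruct (Req_EM_T s w0). auto.
  assert (Hsw : s - w0 <> 0) by lra.
  assert (L := lip_of_deriv phi phi' w0 s M).
  unfold Rdiv. rewrite Rabs_mult, Rabs_inv.
  apply (Rmult_le_reg_r (Rabs (s - w0))). apply Rabs_pos_lt; auto.
  rewrite Rmult_assoc, Rinv_l by (apply Rabs_no_R0; auto). rewrite Rmult_1_r.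
  apply L; intros c Hc; [apply Hd|apply Hb]; apply (betw_K w0 s); auto.
Qed.

Lemma DD_lip (phi phi' phi'' : R -> R) M s s' :
  (forall c, Rabs c <= K -> derivable_pt_lim phi c (phi' c)) ->
  (forall c, Rabs c <= K -> derivable_pt_lim phi' c (phi'' c)) ->
  (forall c, Rabs c <= K -> Rabs (phi'' c) <= M) -> Rabs s <= K -> Rabs s' <= K ->
  Rabs (DDr w0 phi phi' s - DDr w0 phi phi' s') <= M * Rabs (s - s').
Proof.
  intros Hd1 Hd2 Hb Hs Hs'.
  assert (HM : 0 <= M). { pose proof (Hb w0 Hw0). pose proof (Rabs_pos (phi'' w0)). lra. }
  assert (SA : forall sg, Rabs sg <= K -> Rabs (DDr w0 phi phi' sg - phi' w0) <= M * Rabs (sg - w0)).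
  { intros sg Hsg. unfold DDr. destruct (Req_EM_T sg w0).
    - replace (phi' w0 - phi' w0) with 0 by ring. rewrite Rabs_R0. pose proof (Rabs_pos (sg - w0)). nra.
    - destruct (mvt_signed phi phi' w0 sg) as [c [Hc E]].
      { intros c Hc; apply Hd1; apply (betw_K w0 sg); auto. }
      rewrite E. replace (phi' c * (sg - w0) / (sg - w0)) with (phi' c) by (field; lra).
      rewrite <- Rabs_Ropp. replace (- (phi' c - phi' w0)) with (phi' w0 - phi' c) by ring.
      eapply Rle_trans. apply (lip_of_deriv phi' phi'' c w0 M).
      { intros d Hd; apply Hd2. apply (betw_K c w0); auto. apply (betw_K w0 sg); auto. }
      { intros d Hd; apply Hb. apply (betw_K c w0); auto. apply (betw_K w0 sg); auto. }
      apply Rmult_le_compat_l; auto. rewrite <- Rabs_Ropp. replace (- (w0 - c)) with (c - w0) by ring.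
      apply betw_dist; auto. }
  destruct (Rle_dec ((s - w0) * (s' - w0)) 0) as [Hopp|Hsame].
  - eapply Rle_trans with (M * Rabs (s - w0) + M * Rabs (s' - w0)).
    { replace (DDr w0 phi phi' s - DDr w0 phi phi' s') with
        ((DDr w0 phi phi' s - phi' w0) - (DDr w0 phi phi' s' - phi' w0)) by ring.
      eapply Rle_trans; [apply Rabs_triang|]. rewrite Rabs_Ropp.
      apply Rplus_le_compat; apply SA; auto. }
    rewrite <- Rmult_plus_distr_l. apply Rmult_le_compat_l; auto.
    unfold Rabs; destruct (Rcase_abs (s - w0)); destruct (Rcase_abs (s' - w0));
    destruct (Rcase_abs (s - s')); nra.
  - assert (Hs0 : s <> w0) by (intro; subst; apply Hsame; lra).
    assert (Hs0' : s' <> w0) by (intro; subst; apply Hsame; lra).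
    set (q := fun y => (phi y - phi w0) / (y - w0)).
    assert (Hq : forall y, y <> w0 -> DDr w0 phi phi' y = q y).
    { intros y Hy. unfold DDr, q. destruct (Req_EM_T y w0); [contradiction|reflexivity]. }
    rewrite (Hq s Hs0), (Hq s' Hs0').
    assert (Hin : forall c, betw s' s c -> c <> w0 /\ Rabs c <= K).
    { intros c Hc. split. 2:{ apply (betw_K s' s); auto. }
      unfold betw, Rmin, Rmax in Hc. destruct (Rle_dec s' s); intro; subst; nra. }
    apply (lip_of_deriv q (fun y => (phi' y * (y - w0) - (phi y - phi w0)) / (y - w0)^2)).
    + intros c Hc. destruct (Hin c Hc) as [Hc1 Hc2].
      apply (dl_ext (div_fct (fun y => phi y - phi w0) (fun y => y - w0)) _ _ (((phi' c - 0) * (c - w0) - (1 - 0) * (phi c - phi w0)) / Rsqr (c - w0))).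
      { intros y; reflexivity. }
      { unfold Rsqr. simpl. field. lra. }
      apply (derivable_pt_lim_div (fun y => phi y - phi w0) (fun y => y - w0) c (phi' c - 0) (1 - 0)); [| |lra].
      * apply (dminus phi (fun _ => phi w0)); [apply Hd1; auto|apply dconst].
      * apply (dminus (fun y => y) (fun _ => w0)); [apply did|apply dconst].
    + intros c Hc. destruct (Hin c Hc) as [Hc1 Hc2].
      destruct (mvt_signed phi phi' w0 c) as [d [Hdd E]].
      { intros d Hd; apply Hd1; apply (betw_K w0 c); auto. }
      rewrite E. replace ((phi' c * (c - w0) - phi' d * (c - w0)) / (c - w0) ^ 2)
        with ((phi' c - phi' d) / (c - w0)) by (field; lra).
      unfold Rdiv. rewrite Rabs_mult, Rabs_inv.
      apply (Rmult_le_reg_r (Rabs (c - w0))). apply Rabs_pos_lt; lra.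
      rewrite Rmult_assoc, Rinv_l by (apply Rabs_no_R0; lra). rewrite Rmult_1_r.
      eapply Rle_trans. apply (lip_of_deriv phi' phi'' d c M).
      { intros e He; apply Hd2. apply (betw_K d c); auto. apply (betw_K w0 c); auto. }
      { intros e He; apply Hb. apply (betw_K d c); auto. apply (betw_K w0 c); auto. }
      apply Rmult_le_compat_l; auto. rewrite <- Rabs_Ropp. replace (- (c - d)) with (d - c) by ring.
      rewrite <- (Rabs_Ropp (c - w0)). replace (- (c - w0)) with (w0 - c) by ring.
      apply betw_dist. apply betw_sym; auto.
Qed.

Lemma DD_derive_x (F Fs Fx Fsx : R -> R -> R) s x :
  (forall sg, derivable_pt_lim (F sg) x (Fx sg x)) ->
  derivable_pt_lim (Fs w0) x (Fsx w0 x) ->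
  derivable_pt_lim (fun y => DDr w0 (fun sg => F sg y) (fun sg => Fs sg y) s) x
                   (DDr w0 (fun sg => Fx sg x) (fun sg => Fsx sg x) s).
Proof.
  intros H1 H2. unfold DDr. destruct (Req_EM_T s w0).
  - exact H2.
  - apply (dl_ext (fun y => (F s y - F w0 y) * / (s - w0)) _ _ ((Fx s x - Fx w0 x) * / (s - w0) + (F s x - F w0 x) * 0)).
    { intros; unfold Rdiv; ring. } { unfold Rdiv; ring. }
    apply (dmult (fun y => F s y - F w0 y) (fun _ => / (s - w0))); [apply dminus; auto| apply dconst].
Qed.
End DD.

Definition FamOK (F Fs Fx Fsx Fxx Fsxx Fss Fssx : R -> R -> R) (K B : R) : Prop :=
  (forall sg x, Rabs sg <= K -> derivable_pt_lim (fun t => F t x) sg (Fs sg x)) /\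
  (forall sg x, Rabs sg <= K -> derivable_pt_lim (fun t => Fx t x) sg (Fsx sg x)) /\
  (forall sg x, Rabs sg <= K -> derivable_pt_lim (fun t => Fxx t x) sg (Fsxx sg x)) /\
  (forall sg x, Rabs sg <= K -> derivable_pt_lim (fun t => Fs t x) sg (Fss sg x)) /\
  (forall sg x, Rabs sg <= K -> derivable_pt_lim (fun t => Fsx t x) sg (Fssx sg x)) /\
  (forall sg x, derivable_pt_lim (F sg) x (Fx sg x)) /\
  (forall sg x, derivable_pt_lim (Fx sg) x (Fxx sg x)) /\
  (forall sg x, derivable_pt_lim (Fs sg) x (Fsx sg x)) /\
  (forall sg x, derivable_pt_lim (Fsx sg) x (Fsxx sg x)) /\
  (forall sg x, Rabs sg <= K -> Rabs (Fs sg x) <= B) /\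
  (forall sg x, Rabs sg <= K -> Rabs (Fss sg x) <= B) /\
  (forall sg x, Rabs sg <= K -> Rabs (Fsx sg x) <= B / (1 + x^2)) /\
  (forall sg x, Rabs sg <= K -> Rabs (Fsxx sg x) <= B / (1 + x^2)) /\
  (forall sg x, Rabs sg <= K -> Rabs (Fssx sg x) <= B / (1 + x^2)).

Lemma Fam_Comp F Fs Fx Fsx Fxx Fsxx Fss Fssx K B w0 :
  Rabs w0 <= K -> FamOK F Fs Fx Fsx Fxx Fsxx Fss Fssx K B ->
  CompOK (fun s x => DDr w0 (fun t => F t x) (fun t => Fs t x) s)
         (fun s x => DDr w0 (fun t => Fx t x) (fun t => Fsx t x) s)
         (fun s x => DDr w0 (fun t => Fxx t x) (fun t => Fsxx t x) s) K B.
Proof.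
  intros Hw [s1 [s2 [s3 [s4 [s5 [x1 [x2 [x3 [x4 [b1 [b2 [b3 [b4 b5]]]]]]]]]]]]].
  split; [|split; [|split; [|split; [|split; [|split]]]]].
  - intros s x _. apply (DD_derive_x w0 F Fs Fx Fsx); auto.
  - intros s x _. apply (DD_derive_x w0 Fx Fsx Fxx Fsxx); auto.
  - intros s x Hs. apply (DD_bound w0 K); auto.
  - intros s x Hs. apply (DD_bound w0 K); auto.
  - intros s x Hs. apply (DD_bound w0 K); auto.
  - intros s s' x Hs Hs'. apply (DD_lip w0 K Hw (fun t => F t x) (fun t => Fs t x) (fun t => Fss t x)); auto.
  - intros s s' x Hs Hs'. unfold Rdiv. rewrite Rmult_assoc, (Rmult_comm (Rabs _)), <- Rmult_assoc.
    apply (DD_lip w0 K Hw (fun t => Fx t x) (fun t => Fsx t x) (fun t => Fssx t x)); auto.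
Qed.

Lemma dle (f g : R -> R) x l l' :
  derivable_pt_lim f x l -> (forall y, f y = g y) -> l = l' -> derivable_pt_lim g x l'.
Proof. intros H H1 H2. eapply dl_ext; eauto. Qed.

Definition CD (f f' : R -> C) : Prop :=
  forall y, derivable_pt_lim (fun t => fst (f t)) y (fst (f' y)) /\
            derivable_pt_lim (fun t => snd (f t)) y (snd (f' y)).

Lemma CD_ext f g f' g' : (forall t, f t = g t) -> (forall t, f' t = g' t) -> CD f f' -> CD g g'.
Proof.
  intros H1 H2 H y. destruct (H y) as [A B]. split.
  - eapply dle; [exact A| |]. intros; cbv beta; now rewrite H1. now rewrite H2.
  - eapply dle; [exact B| |]. intros; cbv beta; now rewrite H1. now rewrite H2.
Qed.

Lemma CD_const (c : C) : CD (fun _ => c) (fun _ => 0%C).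
Proof. intros y; split; simpl; apply dconst. Qed.

Lemma CD_id : CD (fun t => RtoC t) (fun _ => 1%C).
Proof. intros y; split; simpl. apply did. apply dconst. Qed.

Lemma CD_plus f g f' g' : CD f f' -> CD g g' -> CD (fun t => f t + g t)%C (fun t => f' t + g' t)%C.
Proof.
  intros H1 H2 y. destruct (H1 y) as [A1 B1]; destruct (H2 y) as [A2 B2]. split; simpl.
  - exact (dplus _ _ _ _ _ A1 A2).
  - exact (dplus _ _ _ _ _ B1 B2).
Qed.

Lemma CD_opp f f' : CD f f' -> CD (fun t => - f t)%C (fun t => - f' t)%C.
Proof.
  intros H1 y. destruct (H1 y) as [A1 B1]. split; simpl.
  - eapply dle; [apply (dminus (fun _ => 0) (fun t => fst (f t))); [apply dconst|exact A1]| |];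
      [intros; simpl; ring|cbv beta; ring].
  - eapply dle; [apply (dminus (fun _ => 0) (fun t => snd (f t))); [apply dconst|exact B1]| |];
      [intros; simpl; ring|cbv beta; ring].
Qed.

Lemma CD_minus f g f' g' : CD f f' -> CD g g' -> CD (fun t => f t - g t)%C (fun t => f' t - g' t)%C.
Proof. intros H1 H2. unfold Cminus. apply CD_plus; auto. apply CD_opp; auto. Qed.

Lemma CD_mult f g f' g' : CD f f' -> CD g g' ->
  CD (fun t => f t * g t)%C (fun t => f' t * g t + f t * g' t)%C.
Proof.
  intros H1 H2 y. destruct (H1 y) as [A1 B1]; destruct (H2 y) as [A2 B2]. split; simpl.
  - eapply dle; [apply (dminus (fun t => fst (f t) * fst (g t)) (fun t => snd (f t) * snd (g t))); apply dmult; [exact A1|exact A2|exact B1|exact B2]| |]; [intros; reflexivity|cbv beta; simpl; ring].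
  - eapply dle; [apply (dplus (fun t => fst (f t) * snd (g t)) (fun t => snd (f t) * fst (g t))); apply dmult; [exact A1|exact B2|exact B1|exact A2]| |]; [intros; reflexivity|cbv beta; simpl; ring].
Qed.

Lemma CD_exp g g' : CD g g' -> CD (fun t => Cexp (g t)) (fun t => Cexp (g t) * g' t)%C.
Proof.
  intros H y. destruct (H y) as [A B]. unfold Cexp, Re, Im; split; simpl.
  - eapply dle; [apply (dmult (fun t => exp (fst (g t))) (fun t => cos (snd (g t)))); apply dcomp; [exact A|apply derivable_pt_lim_exp|exact B|apply derivable_pt_lim_cos]| |];
      [intros; reflexivity|cbv beta; simpl; ring].
  - eapply dle; [apply (dmult (fun t => exp (fst (g t))) (fun t => sin (snd (g t)))); apply dcomp; [exact A|apply derivable_pt_lim_exp|exact B|apply derivable_pt_lim_sin]| |];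
      [intros; reflexivity|cbv beta; simpl; ring].
Qed.

Lemma nz_sq (z : C) : z <> 0%C -> fst z ^ 2 + snd z ^ 2 <> 0.
Proof.
  intros Hz H. apply Hz. destruct z as [a b]; simpl in *.
  assert (a = 0) by nra. assert (b = 0) by nra. subst. reflexivity.
Qed.

Lemma CD_inv g g' : CD g g' -> (forall t, g t <> 0%C) ->
  CD (fun t => / g t)%C (fun t => - g' t * / g t * / g t)%C.
Proof.
  intros H Hnz y. destruct (H y) as [A B]. pose proof (nz_sq _ (Hnz y)) as N.
  assert (DN : derivable_pt_lim (fun t => fst (g t) ^ 2 + snd (g t) ^ 2) y
      (2 * fst (g y) * fst (g' y) + 2 * snd (g y) * snd (g' y))).
  { eapply dle; [apply (dplus (fun t => fst (g t) * fst (g t)) (fun t => snd (g t) * snd (g t))); apply dmult; [exact A|exact A|exact B|exact B]| |]; [intros; cbv beta; ring|cbv beta; ring]. }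
  assert (DB : derivable_pt_lim (fun t => - snd (g t)) y (- snd (g' y))).
  { eapply dle; [apply (dminus (fun _ => 0) (fun t => snd (g t))); [apply dconst|exact B]| |];
      [intros; cbv beta; ring|cbv beta; ring]. }
  split; simpl.
  - eapply dle; [apply (derivable_pt_lim_div (fun t => fst (g t)) (fun t => fst (g t) ^ 2 + snd (g t) ^ 2)); [exact A|exact DN|exact N]| |];
      [intros; reflexivity|]. unfold Rsqr. field; intro Hc; apply N; nra.
  - eapply dle; [apply (derivable_pt_lim_div (fun t => - snd (g t)) (fun t => fst (g t) ^ 2 + snd (g t) ^ 2)); [exact DB|exact DN|exact N]| |];
      [intros; reflexivity|]. unfold Rsqr. field; intro Hc; apply N; nra.
Qed.

Section Fam.
Variable p : R.
Hypothesis hp : 1 < p.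

Definition Zc x : C := (RtoC x + Ci * RtoC (/ p))%C.
Definition Wp x : C := (RtoC PI * Zc x)%C.
Definition Sf x : C := Csinh (Wp x).
Definition rf x : C := Cinv (Sf x).
Definition Chf x : C := ((Cexp (Wp x) + Cexp (- Wp x)) / RtoC 2)%C.
Definition ccf x : C := (Chf x * rf x)%C.
Definition Ef s x : C := Cexp (Ci * RtoC s * Zc x).
Definition Bf s x : C := (Ef s x * rf x)%C.
Definition Lf s x : C := (Ci * RtoC s - RtoC PI * ccf x)%C.
Definition Lxf x : C := (- RtoC PI * (RtoC PI - RtoC PI * ccf x * ccf x))%C.

Definition chr x := (exp (PI * x) + exp (- (PI * x))) / 2.
Definition shr x := (exp (PI * x) - exp (- (PI * x))) / 2.

Lemma W_eq x : Wp x = (PI * x, PI * / p).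
Proof. unfold Wp, Zc. apply injective_projections; simpl; ring. Qed.

Lemma S_comp x : Sf x = (shr x * cos (PI * / p), chr x * sin (PI * / p)).
Proof.
  unfold Sf, Csinh. rewrite W_eq. unfold Cexp, shr, chr. unfold Cdiv.
  apply injective_projections; simpl; rewrite ?cos_neg, ?sin_neg; field.
Qed.

Lemma Ch_comp x : Chf x = (chr x * cos (PI * / p), shr x * sin (PI * / p)).
Proof.
  unfold Chf. rewrite W_eq. unfold Cexp, shr, chr. unfold Cdiv.
  apply injective_projections; simpl; rewrite ?cos_neg, ?sin_neg; field.
Qed.

Lemma q_pos : 0 < / p.
Proof. apply Rinv_0_lt_compat; lra. Qed.
Lemma q_lt1 : / p < 1.
Proof. rewrite <- Rinv_1. apply Rinv_lt_contravar; lra. Qed.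

Lemma sinq_pos : 0 < sin (PI * / p).
Proof.
  apply sin_gt_0. pose proof PI_RGT_0. pose proof q_pos. nra.
  pose proof PI_RGT_0. pose proof q_lt1. nra.
Qed.

Lemma chr_pos x : 0 < chr x.
Proof. unfold chr. pose proof (exp_pos (PI*x)); pose proof (exp_pos (-(PI*x))). lra. Qed.

Lemma S_mod x : sin (PI * / p) * chr x <= Cmod (Sf x).
Proof.
  rewrite S_comp. unfold Cmod. simpl fst; simpl snd.
  pose proof sinq_pos; pose proof (chr_pos x).
  rewrite <- (sqrt_pow2 (sin (PI * / p) * chr x)) by nra.
  apply sqrt_le_1_alt. nra.
Qed.

Lemma S_nz x : Sf x <> 0%C.
Proof.
  intros H. pose proof (S_mod x). rewrite H, Cmod_0 in H0.
  pose proof sinq_pos; pose proof (chr_pos x). nra.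
Qed.

Lemma Ch_mod x : Cmod (Chf x) <= chr x.
Proof.
  rewrite Ch_comp. unfold Cmod. simpl fst; simpl snd.
  pose proof (chr_pos x).
  assert (shr x ^ 2 <= chr x ^ 2).
  { unfold shr, chr. pose proof (exp_pos (PI*x)); pose proof (exp_pos (-(PI*x))). nra. }
  pose proof (sin2_cos2 (PI * / p)). unfold Rsqr in H1.
  apply Rle_trans with (sqrt (chr x ^ 2)); [|rewrite sqrt_pow2; lra].
  apply sqrt_le_1_alt.
  assert (0 <= sin (PI * / p) ^ 2) by nra.
  assert (shr x ^ 2 * sin (PI * / p) ^ 2 <= chr x ^ 2 * sin (PI * / p) ^ 2) by (apply Rmult_le_compat_r; auto).
  replace ((chr x * cos (PI * / p)) ^ 2 + (shr x * sin (PI * / p)) ^ 2) with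
    (chr x ^ 2 * cos (PI * / p) ^ 2 + shr x ^ 2 * sin (PI * / p) ^ 2) by ring.
  replace (chr x ^ 2) with (chr x ^ 2 * (sin (PI * / p) * sin (PI * / p) + cos (PI * / p) * cos (PI * / p))) at 2 by (rewrite H1; ring).
  nra.
Qed.

Lemma CD_Zc : CD Zc (fun _ => 1%C).
Proof.
  eapply CD_ext; [| |apply (CD_plus _ _ _ _ CD_id (CD_const (Ci * RtoC (/ p))))]; intros; unfold Zc; try reflexivity; cbv beta.
  ring.
Qed.

Lemma CD_W : CD Wp (fun _ => RtoC PI).
Proof.
  eapply CD_ext; [| |apply (CD_mult _ _ _ _ (CD_const (RtoC PI)) CD_Zc)]; intros; unfold Wp; try reflexivity; cbv beta.
  ring.
Qed.

Lemma CD_S : CD Sf (fun y => RtoC PI * Chf y)%C.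
Proof.
  eapply CD_ext; [| |apply (CD_mult _ _ _ _ (CD_minus _ _ _ _ (CD_exp _ _ CD_W) (CD_exp _ _ (CD_opp _ _ CD_W))) (CD_const (/ RtoC 2)))];
   intros; unfold Sf, Csinh, Chf, Cdiv; try reflexivity; cbv beta; ring.
Qed.

Lemma CD_Ch : CD Chf (fun y => RtoC PI * Sf y)%C.
Proof.
  eapply CD_ext; [| |apply (CD_mult _ _ _ _ (CD_plus _ _ _ _ (CD_exp _ _ CD_W) (CD_exp _ _ (CD_opp _ _ CD_W))) (CD_const (/ RtoC 2)))];
   intros; unfold Sf, Csinh, Chf, Cdiv; try reflexivity; cbv beta; ring.
Qed.

Lemma CD_r : CD rf (fun y => - RtoC PI * ccf y * rf y)%C.
Proof.
  eapply CD_ext; [| |apply (CD_inv _ _ CD_S S_nz)]; intros; unfold ccf, rf; try reflexivity; cbv beta.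
  pose proof (S_nz t). field. auto.
Qed.

Lemma CD_cc : CD ccf (fun y => RtoC PI - RtoC PI * ccf y * ccf y)%C.
Proof.
  eapply CD_ext; [| |apply (CD_mult _ _ _ _ CD_Ch CD_r)]; intros; unfold ccf; try reflexivity; cbv beta.
  unfold rf. pose proof (S_nz t). field. auto.
Qed.

Lemma CD_E_x s : CD (Ef s) (fun y => Ef s y * (Ci * RtoC s))%C.
Proof.
  eapply CD_ext; [| |apply (CD_exp _ _ (CD_mult _ _ _ _ (CD_const (Ci * RtoC s)) CD_Zc))]; intros; unfold Ef; try reflexivity; cbv beta.
  ring.
Qed.

Lemma CD_B_x s : CD (Bf s) (fun y => Lf s y * Bf s y)%C.
Proof.
  eapply CD_ext; [| |apply (CD_mult _ _ _ _ (CD_E_x s) CD_r)]; intros; unfold Bf, Lf; try reflexivity; cbv beta.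
  unfold ccf. ring.
Qed.

Lemma CD_PB_x s P P' : CD P P' ->
  CD (fun y => P y * Bf s y)%C (fun y => (P' y + P y * Lf s y) * Bf s y)%C.
Proof.
  intros H. eapply CD_ext; [| |apply (CD_mult _ _ _ _ H (CD_B_x s))]; intros; try reflexivity; cbv beta; ring.
Qed.


Lemma CD_L_x s : CD (Lf s) Lxf.
Proof.
  eapply CD_ext; [| |apply (CD_minus _ _ _ _ (CD_const (Ci * RtoC s)) (CD_mult _ _ _ _ (CD_const (RtoC PI)) CD_cc))];
    intros; unfold Lf, Lxf; try reflexivity; cbv beta; ring.
Qed.

Lemma CD_E_s x : CD (fun t => Ef t x) (fun t => Ef t x * (Ci * Zc x))%C.
Proof.
  eapply CD_ext; [| |apply (CD_exp _ _ (CD_mult _ _ _ _ (CD_mult _ _ _ _ (CD_const Ci) CD_id) (CD_const (Zc x))))];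
    intros; unfold Ef; try reflexivity; cbv beta; ring.
Qed.

Lemma CD_PB_s x P P' : CD P P' ->
  CD (fun t => P t * Bf t x)%C (fun t => (P' t + P t * (Ci * Zc x)) * Bf t x)%C.
Proof.
  intros H. eapply CD_ext; [| |apply (CD_mult _ _ _ _ H (CD_mult _ _ _ _ (CD_E_s x) (CD_const (rf x))))];
    intros; unfold Bf; try reflexivity; cbv beta; ring.
Qed.

Lemma CD_L_s x : CD (fun t => Lf t x) (fun _ => Ci).
Proof.
  eapply CD_ext; [| |apply (CD_minus _ _ _ _ (CD_mult _ _ _ _ (CD_const Ci) CD_id) (CD_const (RtoC PI * ccf x)))];
    intros; unfold Lf; try reflexivity; cbv beta; ring.
Qed.
End Fam.

Lemma cb_mult (V : R) m n (a b : C) : 0 <= V -> Cmod a <= V ^ m -> Cmod b <= V ^ n -> Cmod (a * b)%C <= V ^ (m + n).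
Proof.
  intros HV H1 H2. rewrite Cmod_mult, pow_add. apply Rmult_le_compat; auto using Cmod_ge_0.
Qed.
Lemma cb_plus (V : R) m n (a b : C) : 2 <= V -> Cmod a <= V ^ m -> Cmod b <= V ^ n -> Cmod (a + b)%C <= V ^ (S (Nat.max m n)).
Proof.
  intros HV H1 H2. eapply Rle_trans; [apply Cmod_triangle|].
  assert (V ^ m <= V ^ Nat.max m n) by (apply Rle_pow; [lra|lia]).
  assert (V ^ n <= V ^ Nat.max m n) by (apply Rle_pow; [lra|lia]).
  simpl. assert (0 <= V ^ Nat.max m n) by (apply pow_le; lra). nra.
Qed.
Lemma cb_opp (V : R) m (a : C) : Cmod a <= V ^ m -> Cmod (- a)%C <= V ^ m.
Proof. rewrite Cmod_opp; auto. Qed.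
Lemma cb_minus (V : R) m n (a b : C) : 2 <= V -> Cmod a <= V ^ m -> Cmod b <= V ^ n -> Cmod (a - b)%C <= V ^ (S (Nat.max m n)).
Proof. intros. unfold Cminus. apply cb_plus; auto. apply cb_opp; auto. Qed.
Lemma cb_atom (V : R) (a : C) : Cmod a <= V -> Cmod a <= V ^ 1.
Proof. rewrite pow_1; auto. Qed.

Ltac cb hV :=
  lazymatch goal with
  | |- Cmod (?a * ?b)%C <= _ => eapply cb_mult; [lra| cb hV | cb hV]
  | |- Cmod (?a - ?b)%C <= _ => eapply cb_minus; [exact hV| cb hV | cb hV]
  | |- Cmod (?a + ?b)%C <= _ => eapply cb_plus; [exact hV| cb hV | cb hV]
  | |- Cmod (- ?a)%C <= _ => eapply cb_opp; cb hV
  | |- _ => eapply cb_atom; assumption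
  end.

Lemma exp_mult_pow n y : exp (INR n * y) = exp y ^ n.
Proof.
  induction n. simpl. replace (0 * y) with 0 by ring. apply exp_0.
  rewrite S_INR. replace ((INR n + 1) * y) with (INR n * y + y) by ring. rewrite exp_plus, IHn. simpl; ring.
Qed.

Lemma poly_exp n a : 0 <= a -> (1 + a) ^ n <= INR n ^ n * exp a.
Proof.
  intros Ha. destruct n. simpl. pose proof (exp_ineq1_le a). lra.
  set (m := INR (S n)). assert (Hm : 1 <= m) by (unfold m; rewrite S_INR; pose proof (pos_INR n); lra).
  replace (exp a) with (exp (a / m) ^ S n).
  2:{ rewrite <- exp_mult_pow. fold m. f_equal. field. lra. }
  rewrite <- Rpow_mult_distr. apply pow_incr. split. lra.
  pose proof (exp_ineq1_le (a / m)).
  assert (1 + a <= m * (1 + a / m)).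
  { replace (m * (1 + a / m)) with (m + a) by (field; lra). lra. }
  assert (m * (1 + a/m) <= m * exp (a / m)) by (apply Rmult_le_compat_l; lra). lra.
Qed.

Section H.
Variable p : R.
Hypothesis hp : 1 < p.
Variable K : R.
Hypothesis HK : 0 <= K.

Definition sq := sin (PI * / p).
Definition T := K + PI + / sq + 2.
Definition Vx x := T * (1 + Rabs x).

Lemma sq_pos : 0 < sq.
Proof. apply sinq_pos; auto. Qed.

Lemma T_ge2 : 2 <= T.
Proof. unfold T. pose proof sq_pos. pose proof PI_RGT_0. assert (0 < / sq) by (apply Rinv_0_lt_compat; auto). lra. Qed.

Lemma Vx_ge x : T <= Vx x.
Proof. unfold Vx. pose proof T_ge2. pose proof (Rabs_pos x). nra. Qed.

Lemma Vx_ge2 x : 2 <= Vx x.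
Proof. pose proof (Vx_ge x); pose proof T_ge2; lra. Qed.

Lemma at_Ci x : Cmod Ci <= Vx x.
Proof.
  replace (Cmod Ci) with 1. pose proof (Vx_ge2 x); lra.
  unfold Cmod, Ci; simpl. replace (0 * (0 * 1) + 1 * (1 * 1)) with 1 by ring. now rewrite sqrt_1.
Qed.
Lemma at_s s x : Rabs s <= K -> Cmod (RtoC s) <= Vx x.
Proof.
  intros Hs. rewrite Cmod_R. pose proof (Vx_ge x). unfold T in *. pose proof sq_pos. pose proof PI_RGT_0.
  assert (0 < / sq) by (apply Rinv_0_lt_compat; auto). lra.
Qed.
Lemma at_PI x : Cmod (RtoC PI) <= Vx x.
Proof.
  rewrite Cmod_R, Rabs_pos_eq by (pose proof PI_RGT_0; lra). pose proof (Vx_ge x). unfold T in *.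
  pose proof sq_pos. assert (0 < / sq) by (apply Rinv_0_lt_compat; auto). lra.
Qed.
Lemma at_one x : Cmod 1%C <= Vx x.
Proof. rewrite Cmod_1. pose proof (Vx_ge2 x). lra. Qed.

Lemma r_mod x : Cmod (rf p x) <= / (sq * chr x).
Proof.
  unfold rf. rewrite Cmod_inv by (apply S_nz; auto). apply Rinv_le_contravar.
  pose proof sq_pos; pose proof (chr_pos x); nra. apply S_mod; auto.
Qed.

Lemma at_cc x : Cmod (ccf p x) <= Vx x.
Proof.
  unfold ccf. rewrite Cmod_mult. pose proof (Ch_mod p x). pose proof (r_mod x).
  pose proof sq_pos; pose proof (chr_pos x).
  assert (Cmod (Chf p x) * Cmod (rf p x) <= chr x * / (sq * chr x)).
  { apply Rmult_le_compat; auto using Cmod_ge_0. }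
  replace (chr x * / (sq * chr x)) with (/ sq) in H3 by (field; lra).
  pose proof (Vx_ge x). unfold T in *. pose proof PI_RGT_0. lra.
Qed.

Lemma at_Zc x : Cmod (Zc p x) <= Vx x.
Proof.
  eapply Rle_trans; [apply Cmod_le_sum|]. unfold Zc; simpl.
  replace (x + (0 * / p - 1 * 0)) with x by ring. replace (0 + (0 * 0 + 1 * / p)) with (/ p) by ring.
  pose proof (q_pos p hp); pose proof (q_lt1 p hp). rewrite (Rabs_pos_eq (/ p)) by lra.
  unfold Vx. pose proof T_ge2. pose proof (Rabs_pos x). nra.
Qed.

Lemma Cmod_Cexp (u : C) : Cmod (Cexp u) = exp (fst u).
Proof.
  unfold Cexp, Cmod, Re, Im; cbn [fst snd].
  replace ((exp (fst u) * cos (snd u)) ^ 2 + (exp (fst u) * sin (snd u)) ^ 2) with (exp (fst u) ^ 2)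
    by (pose proof (sin2_cos2 (snd u)); unfold Rsqr in *; nra).
  apply sqrt_pow2. apply Rlt_le, exp_pos.
Qed.

Lemma E_mod s x : Rabs s <= K -> Cmod (Ef p s x) <= exp K.
Proof.
  intros Hs. unfold Ef. rewrite Cmod_Cexp.
  replace (fst (Ci * RtoC s * Zc p x)%C) with (- s * / p) by (unfold Zc; simpl; ring).
  assert (- s * / p <= K).
  { pose proof (q_pos p hp); pose proof (q_lt1 p hp). apply Rabs_le_between in Hs. nra. }
  destruct (Rle_lt_or_eq_dec _ _ H) as [Hl|He]. left; apply exp_increasing; auto. rewrite He; lra.
Qed.

Lemma div_cross X Y u v : 0 < u -> 0 < v -> X * v <= Y * u -> X / u <= Y / v.
Proof.
  intros Hu Hv H. apply (Rmult_le_reg_r (u * v)). nra.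
  replace (X / u * (u * v)) with (X * v) by (field; lra).
  replace (Y / v * (u * v)) with (Y * u) by (field; lra). auto.
Qed.

Lemma chr_ge x : exp (Rabs x) <= 2 * chr x.
Proof.
  unfold chr. pose proof PI2_1. pose proof (exp_pos (PI * x)); pose proof (exp_pos (- (PI * x))).
  assert (exp (Rabs x) <= exp (PI * Rabs x)).
  { destruct (Rle_lt_or_eq_dec 0 (Rabs x) (Rabs_pos x)) as [h|h].
    left; apply exp_increasing; nra. rewrite <- h; replace (PI * 0) with 0 by ring; lra. }
  unfold Rabs in *. destruct (Rcase_abs x).
  - replace (PI * - x) with (- (PI * x)) in H2 by ring. lra.
  - lra.
Qed.

Lemma PB_bound N : exists BN, 0 < BN /\ forall s x (P : C), Rabs s <= K -> Cmod P <= Vx x ^ N ->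
  Cmod (P * Bf p s x)%C <= BN / (1 + x^2).
Proof.
  set (D := INR (N + 2) ^ (N + 2)).
  assert (HD : 0 < D). { unfold D. apply pow_lt. rewrite plus_INR. simpl. pose proof (pos_INR N). lra. }
  pose proof sq_pos as Hsq. pose proof T_ge2 as HT.
  exists (T ^ N * exp K * / sq * (2 * D)). split.
  { apply Rmult_lt_0_compat; [|lra]. apply Rmult_lt_0_compat; [|apply Rinv_0_lt_compat; auto].
    apply Rmult_lt_0_compat; [apply pow_lt; lra|apply exp_pos]. }
  intros s x P Hs HP. unfold Bf. rewrite !Cmod_mult.
  pose proof (E_mod s x Hs) as HE. pose proof (r_mod x) as Hr. pose proof (chr_pos x) as Hch.
  set (a := 1 + Rabs x). assert (Ha : 1 <= a) by (unfold a; pose proof (Rabs_pos x); lra).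
  assert (Hpoly : a ^ N * (1 + x^2) <= 2 * D * chr x).
  { assert (1 + x^2 <= a^2). { unfold a. rewrite <- (pow2_abs x). pose proof (Rabs_pos x). nra. }
    assert (a ^ N * (1 + x^2) <= a ^ (N + 2)).
    { rewrite pow_add. apply Rmult_le_compat_l; auto. apply pow_le; lra. }
    pose proof (poly_exp (N + 2) (Rabs x) (Rabs_pos x)). fold a D in H1.
    pose proof (chr_ge x). assert (D * exp (Rabs x) <= D * (2 * chr x)) by (apply Rmult_le_compat_l; lra).
    lra. }
  assert (HVx : Vx x ^ N = T ^ N * a ^ N) by (unfold Vx; fold a; apply Rpow_mult_distr).
  rewrite HVx in HP.
  assert (Hprod : Cmod P * Cmod (Ef p s x) * Cmod (rf p x) <= (T ^ N * a ^ N) * exp K * / (sq * chr x)).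
  { apply Rmult_le_compat; try apply Rmult_le_pos; auto using Cmod_ge_0.
    apply Rmult_le_compat; auto using Cmod_ge_0. }
  rewrite <- Rmult_assoc. eapply Rle_trans; [exact Hprod|].
  replace (T ^ N * a ^ N * exp K * / (sq * chr x)) with ((T ^ N * exp K * / sq) * (a ^ N / chr x)) by (field; lra).
  replace (T ^ N * exp K * / sq * (2 * D) / (1 + x ^ 2)) with ((T ^ N * exp K * / sq) * ((2 * D) / (1 + x ^ 2))) by (field; nra).
  apply Rmult_le_compat_l.
  { apply Rmult_le_pos; [|left; apply Rinv_0_lt_compat; auto]. apply Rmult_le_pos; [apply pow_le; lra|left; apply exp_pos]. }
  apply div_cross; auto. nra.
Qed.
End H.

Section I.
Variable p : R.
Hypothesis hp : 1 < p.
Variable K : R.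
Hypothesis HK : 0 <= K.

Definition PJ (s x : R) : C := 1%C.
Definition PJx (s x : R) : C := Lf p s x.
Definition PJxx (s x : R) : C := (Lxf p x + Lf p s x * Lf p s x)%C.
Definition PJs (s x : R) : C := (Ci * Zc p x)%C.
Definition PJss (s x : R) : C := ((Ci * Zc p x) * (Ci * Zc p x))%C.
Definition PJsx (s x : R) : C := (Ci + Ci * Zc p x * Lf p s x)%C.
Definition PJsxx (s x : R) : C := ((Ci * Lf p s x + Lf p s x * Ci) + (Lxf p x + Lf p s x * Lf p s x) * (Ci * Zc p x))%C.
Definition PJssx (s x : R) : C := (Ci * Zc p x * Ci + (Ci + Ci * Zc p x * Lf p s x) * (Ci * Zc p x))%C.

Definition Jc (P : R -> R -> C) (s x : R) : C := (P s x * Bf p s x)%C.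

Lemma X1 s : CD (Jc PJ s) (Jc PJx s).
Proof.
  eapply CD_ext; [| |apply (CD_PB_x p hp s (fun _ => 1%C) (fun _ => 0%C) (CD_const 1%C))];
   intros; unfold Jc, PJ, PJx; try reflexivity; cbv beta; ring.
Qed.
Lemma X2 s : CD (Jc PJx s) (Jc PJxx s).
Proof.
  eapply CD_ext; [| |apply (CD_PB_x p hp s _ _ (CD_L_x p hp s))];
   intros; unfold Jc, PJx, PJxx; try reflexivity; cbv beta; ring.
Qed.
Lemma X3 s : CD (Jc PJs s) (Jc PJsx s).
Proof.
  eapply CD_ext; [| |apply (CD_PB_x p hp s _ _ (CD_mult _ _ _ _ (CD_const Ci) (CD_Zc p)))];
   intros; unfold Jc, PJs, PJsx; try reflexivity; cbv beta; ring.
Qed.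
Lemma X4 s : CD (Jc PJsx s) (Jc PJsxx s).
Proof.
  eapply CD_ext; [| |apply (CD_PB_x p hp s _ _ (CD_plus _ _ _ _ (CD_const Ci)
      (CD_mult _ _ _ _ (CD_mult _ _ _ _ (CD_const Ci) (CD_Zc p)) (CD_L_x p hp s))))];
   intros; unfold Jc, PJsx, PJsxx; try reflexivity; cbv beta; ring.
Qed.
Lemma S1 x : CD (fun t => Jc PJ t x) (fun t => Jc PJs t x).
Proof.
  eapply CD_ext; [| |apply (CD_PB_s p x (fun _ => 1%C) (fun _ => 0%C) (CD_const 1%C))];
   intros; unfold Jc, PJ, PJs; try reflexivity; cbv beta; ring.
Qed.
Lemma S2 x : CD (fun t => Jc PJx t x) (fun t => Jc PJsx t x).
Proof.
  eapply CD_ext; [| |apply (CD_PB_s p x _ _ (CD_L_s p x))];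
   intros; unfold Jc, PJx, PJsx; try reflexivity; cbv beta; ring.
Qed.
Lemma S3 x : CD (fun t => Jc PJxx t x) (fun t => Jc PJsxx t x).
Proof.
  eapply CD_ext; [| |apply (CD_PB_s p x _ _ (CD_plus _ _ _ _ (CD_const (Lxf p x))
      (CD_mult _ _ _ _ (CD_L_s p x) (CD_L_s p x))))];
   intros; unfold Jc, PJxx, PJsxx; try reflexivity; cbv beta; ring.
Qed.
Lemma S4 x : CD (fun t => Jc PJs t x) (fun t => Jc PJss t x).
Proof.
  eapply CD_ext; [| |apply (CD_PB_s p x _ _ (CD_const (Ci * Zc p x)%C))];
   intros; unfold Jc, PJs, PJss; try reflexivity; cbv beta; ring.
Qed.
Lemma S5 x : CD (fun t => Jc PJsx t x) (fun t => Jc PJssx t x).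
Proof.
  eapply CD_ext; [| |apply (CD_PB_s p x _ _ (CD_plus _ _ _ _ (CD_const Ci)
      (CD_mult _ _ _ _ (CD_const (Ci * Zc p x)%C) (CD_L_s p x))))];
   intros; unfold Jc, PJsx, PJssx; try reflexivity; cbv beta; ring.
Qed.

Ltac polyb := eexists; intros s x Hs;
  pose proof (at_Ci p hp K HK x); pose proof (at_s p hp K HK s x Hs); pose proof (at_PI p hp K HK x);
  pose proof (at_cc p hp K HK x); pose proof (at_Zc p hp K HK x); pose proof (at_one p hp K HK x);
  pose proof (Vx_ge2 p hp K HK x) as hV.

Lemma bPs : exists N, forall s x, Rabs s <= K -> Cmod (PJs s x) <= Vx p K x ^ N.
Proof. polyb. unfold PJs. cb hV. Qed.
Lemma bPss : exists N, forall s x, Rabs s <= K -> Cmod (PJss s x) <= Vx p K x ^ N.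
Proof. polyb. unfold PJss. cb hV. Qed.
Lemma bPsx : exists N, forall s x, Rabs s <= K -> Cmod (PJsx s x) <= Vx p K x ^ N.
Proof. polyb. unfold PJsx, Lf. cb hV. Qed.
Lemma bPsxx : exists N, forall s x, Rabs s <= K -> Cmod (PJsxx s x) <= Vx p K x ^ N.
Proof. polyb. unfold PJsxx, Lf, Lxf. cb hV. Qed.
Lemma bPssx : exists N, forall s x, Rabs s <= K -> Cmod (PJssx s x) <= Vx p K x ^ N.
Proof. polyb. unfold PJssx, Lf. cb hV. Qed.

Lemma Jbound (P : R -> R -> C) : (exists N, forall s x, Rabs s <= K -> Cmod (P s x) <= Vx p K x ^ N) ->
  exists BN, 0 < BN /\ forall s x, Rabs s <= K -> Cmod (Jc P s x) <= BN / (1 + x^2).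
Proof.
  intros [N HN]. destruct (PB_bound p hp K HK N) as [BN [HB HP]]. exists BN; split; auto.
  intros s x Hs. apply HP; auto.
Qed.

Lemma pr_bound (pr : C -> R) z : (pr = fst \/ pr = snd) -> Rabs (pr z) <= Cmod z.
Proof.
  intros [->| ->]; eapply Rle_trans; [|apply Rmax_Cmod| |apply Rmax_Cmod]; [apply Rmax_l|apply Rmax_r].
Qed.

Lemma pr_CD (pr : C -> R) f f' : (pr = fst \/ pr = snd) -> CD f f' -> forall y, derivable_pt_lim (fun t => pr (f t)) y (pr (f' y)).
Proof. intros [->| ->] H y; apply H. Qed.

Lemma Fam_pr (pr : C -> R) : (pr = fst \/ pr = snd) -> exists B,
  FamOK (fun s x => pr (Jc PJ s x)) (fun s x => pr (Jc PJs s x)) (fun s x => pr (Jc PJx s x))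
        (fun s x => pr (Jc PJsx s x)) (fun s x => pr (Jc PJxx s x)) (fun s x => pr (Jc PJsxx s x))
        (fun s x => pr (Jc PJss s x)) (fun s x => pr (Jc PJssx s x)) K B.
Proof.
  intros Hpr.
  destruct (Jbound _ bPs) as [B1 [H1 b1]]. destruct (Jbound _ bPss) as [B2 [H2 b2]].
  destruct (Jbound _ bPsx) as [B3 [H3 b3]]. destruct (Jbound _ bPsxx) as [B4 [H4 b4]].
  destruct (Jbound _ bPssx) as [B5 [H5 b5]].
  set (B := B1 + B2 + B3 + B4 + B5). exists B.
  assert (Hw : forall Bi x, 0 < Bi -> Bi <= B -> Bi / (1 + x^2) <= B / (1 + x^2)).
  { intros. unfold Rdiv. apply Rmult_le_compat_r; auto. left; apply inv1x2_pos. }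
  assert (Hw1 : forall x, B / (1 + x^2) <= B).
  { intros. unfold Rdiv. pose proof (inv1x2_le1 x). pose proof (inv1x2_pos x). unfold B. nra. }
  repeat split.
  - intros sg x _. apply (pr_CD pr (fun t => Jc PJ t x) (fun t => Jc PJs t x) Hpr (S1 x)).
  - intros sg x _. apply (pr_CD pr (fun t => Jc PJx t x) (fun t => Jc PJsx t x) Hpr (S2 x)).
  - intros sg x _. apply (pr_CD pr (fun t => Jc PJxx t x) (fun t => Jc PJsxx t x) Hpr (S3 x)).
  - intros sg x _. apply (pr_CD pr (fun t => Jc PJs t x) (fun t => Jc PJss t x) Hpr (S4 x)).
  - intros sg x _. apply (pr_CD pr (fun t => Jc PJsx t x) (fun t => Jc PJssx t x) Hpr (S5 x)).
  - intros sg x. apply (pr_CD pr _ _ Hpr (X1 sg)).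
  - intros sg x. apply (pr_CD pr _ _ Hpr (X2 sg)).
  - intros sg x. apply (pr_CD pr _ _ Hpr (X3 sg)).
  - intros sg x. apply (pr_CD pr _ _ Hpr (X4 sg)).
  - intros sg x Hs. eapply Rle_trans; [apply pr_bound; auto|]. eapply Rle_trans; [apply b1; auto|].
    eapply Rle_trans; [apply Hw; auto; unfold B; lra|]. auto.
  - intros sg x Hs. eapply Rle_trans; [apply pr_bound; auto|]. eapply Rle_trans; [apply b2; auto|].
    eapply Rle_trans; [apply Hw; auto; unfold B; lra|]. auto.
  - intros sg x Hs. eapply Rle_trans; [apply pr_bound; auto|]. eapply Rle_trans; [apply b3; auto|].
    apply Hw; auto; unfold B; lra.
  - intros sg x Hs. eapply Rle_trans; [apply pr_bound; auto|]. eapply Rle_trans; [apply b4; auto|].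
    apply Hw; auto; unfold B; lra.
  - intros sg x Hs. eapply Rle_trans; [apply pr_bound; auto|]. eapply Rle_trans; [apply b5; auto|].
    apply Hw; auto; unfold B; lra.
Qed.
End I.

Lemma exp_le a b : a <= b -> exp a <= exp b.
Proof. intros H. destruct (Rle_lt_or_eq_dec _ _ H). left; apply exp_increasing; auto. subst; lra. Qed.

Lemma deriv_eps f t l : derivable_pt_lim f t l ->
  forall eps, 0 < eps -> exists delta, 0 < delta /\ forall s, Rabs (s - t) < delta -> Rabs (f s - f t) < eps.
Proof.
  intros H. assert (Hc : continuity_pt f t) by (apply derivable_continuous_pt; exists l; auto).
  intros eps He. destruct (Hc eps He) as [alp [Ha Hf]]. exists alp; split; auto.
  intros s Hs. destruct (Req_dec s t) as [->|Hne].
  - rewrite Rminus_eq_0, Rabs_R0; auto.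
  - apply (Hf s). split. split; [exact I|auto]. simpl; unfold R_dist; auto.
Qed.

Lemma Cmod_RtoC_minus a b : Cmod (RtoC a - RtoC b)%C = Rabs (a - b).
Proof. rewrite <- RtoC_minus. apply Cmod_R. Qed.

Section Omega.
Variables (alpha alpha' beta : R -> R) (M : R).
Hypothesis Hpos : forall t, 0 < t -> 0 < alpha t.
Hypothesis Hbeta : forall s, 0 < s -> 0 < beta s /\ alpha (beta s) = s.
Hypothesis Hd : forall t, 0 < t -> derivable_pt_lim alpha t (alpha' t) /\ 0 < alpha' t.
Hypothesis HM : forall t, 0 < t -> Rabs (ln (alpha' t)) <= M.

Lemma a'_bounds t : 0 < t -> exp (- M) <= alpha' t <= exp M.
Proof.
  intros Ht. destruct (Hd t Ht) as [_ Hp]. pose proof (HM t Ht). apply Rabs_le_between in H.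
  rewrite <- (exp_ln (alpha' t)) by auto. split; apply exp_le; lra.
Qed.

Lemma M_nonneg : 0 <= M.
Proof. pose proof (HM 1 Rlt_0_1). pose proof (Rabs_pos (ln (alpha' 1))). lra. Qed.

Lemma a_incr u t : 0 < u -> u < t ->
  exp (- M) * (t - u) <= alpha t - alpha u <= exp M * (t - u).
Proof.
  intros Hu Hut. destruct (MVT_cor2 alpha alpha' u t Hut) as [c [E Hc]].
  { intros c Hc. apply Hd. lra. }
  rewrite E. pose proof (a'_bounds c ltac:(lra)). split; apply Rmult_le_compat_r; lra.
Qed.

Lemma a_mono u t : 0 < u -> u <= t -> alpha u <= alpha t.
Proof.
  intros Hu H. destruct (Rle_lt_or_eq_dec _ _ H) as [h|h]; [|subst; lra].
  pose proof (a_incr u t Hu h). pose proof (exp_pos (- M)). nra.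
Qed.

Lemma a_upper t : 0 < t -> alpha t <= exp M * t.
Proof.
  intros Ht. apply Rnot_lt_le. intros Hc.
  set (y := (alpha t - exp M * t) / 2). assert (Hy : 0 < y) by (unfold y; lra).
  destruct (Hbeta y Hy) as [Hb1 Hb2].
  set (u := Rmin (beta y) (t / 2)).
  assert (Hu : 0 < u) by (unfold u; apply Rmin_pos; lra).
  assert (Hut : u < t) by (unfold u; pose proof (Rmin_r (beta y) (t/2)); lra).
  assert (alpha u <= y) by (rewrite <- Hb2; apply a_mono; auto; apply Rmin_l).
  pose proof (a_incr u t Hu Hut). pose proof (exp_pos M). unfold y in *. nra.
Qed.

Lemma a_lower t : 0 < t -> exp (- M) * t <= alpha t.
Proof.
  intros Ht. apply Rnot_lt_le. intros Hc. pose proof (exp_pos (- M)) as He.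
  set (d := exp (- M) * t - alpha t).
  set (u := Rmin (t / 2) (d / (2 * exp (- M)))).
  assert (Hd0 : 0 < d) by (unfold d; lra).
  assert (Hu : 0 < u) by (unfold u; apply Rmin_pos; [lra| apply Rdiv_lt_0_compat; lra]).
  assert (Hut : u < t) by (unfold u; pose proof (Rmin_l (t/2) (d / (2 * exp (- M)))); lra).
  assert (Hu2 : exp (- M) * u <= d / 2).
  { pose proof (Rmin_r (t/2) (d / (2 * exp (- M)))). fold u in H.
    replace (d / 2) with (exp (- M) * (d / (2 * exp (- M)))) by (field; lra).
    apply Rmult_le_compat_l; lra. }
  pose proof (a_incr u t Hu Hut). pose proof (Hpos u Hu). unfold d in *. nra.
Qed.

Lemma ratio_bounds t : 0 < t -> exp (- M) <= alpha t / t <= exp M.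
Proof.
  intros Ht. pose proof (a_upper t Ht); pose proof (a_lower t Ht). split.
  - apply (Rmult_le_reg_r t); auto. unfold Rdiv. rewrite Rmult_assoc, Rinv_l by lra. lra.
  - apply (Rmult_le_reg_r t); auto. unfold Rdiv. rewrite Rmult_assoc, Rinv_l by lra. lra.
Qed.

Lemma omega_bound t : 0 < t -> Rabs (exponent alpha t) <= M.
Proof.
  intros Ht. unfold exponent. pose proof (ratio_bounds t Ht) as [H1 H2].
  pose proof (exp_pos (- M)). apply Rabs_le. split.
  - rewrite <- (ln_exp (- M)). apply ln_le; auto.
  - rewrite <- (ln_exp M). apply ln_le; lra.
Qed.

Lemma omega_deriv t : 0 < t -> exists l, derivable_pt_lim (exponent alpha) t l.
Proof.
  intros Ht. destruct (Hd t Ht) as [Hd1 _]. pose proof (ratio_bounds t Ht) as [H1 _].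
  pose proof (exp_pos (- M)).
  eexists. unfold exponent.
  apply (dcomp ln (div_fct alpha (fun s => s))).
  - apply (derivable_pt_lim_div alpha (fun s => s) t (alpha' t) 1 Hd1 (did t)). lra.
  - apply derivable_pt_lim_ln. unfold div_fct. lra.
Qed.

Lemma key_est lam t : 0 < lam < 1 -> 0 < t -> exists xi, lam * t < xi < t /\
  Rabs (alpha t / t - alpha' t) <= Rabs (alpha' xi - alpha' t) + 2 * lam * exp M.
Proof.
  intros Hl Ht. assert (Hlt : lam * t < t) by nra. assert (Hl0 : 0 < lam * t) by nra.
  destruct (MVT_cor2 alpha alpha' (lam * t) t Hlt) as [xi [E Hxi]].
  { intros c Hc. apply Hd. lra. }
  exists xi; split; auto.
  pose proof (a_upper (lam * t) Hl0). pose proof (Hpos (lam * t) Hl0).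
  pose proof (a'_bounds xi ltac:(lra)) as [Hx1 Hx2].
  assert (Hr : alpha t / t = alpha (lam * t) / t + alpha' xi * (1 - lam)).
  { replace (alpha t) with (alpha (lam * t) + alpha' xi * (t - lam * t)) by lra. field. lra. }
  rewrite Hr.
  assert (0 <= alpha (lam * t) / t <= lam * exp M).
  { split. apply Rmult_le_pos; [lra| left; apply Rinv_0_lt_compat; auto].
    apply (Rmult_le_reg_r t); auto. unfold Rdiv. rewrite Rmult_assoc, Rinv_l by lra. lra. }
  replace (alpha (lam * t) / t + alpha' xi * (1 - lam) - alpha' t) with
    ((alpha' xi - alpha' t) + (alpha (lam * t) / t - lam * alpha' xi)) by ring.
  eapply Rle_trans; [apply Rabs_triang|]. apply Rplus_le_compat_l.
  pose proof (exp_pos (- M)). assert (0 <= lam * alpha' xi <= lam * exp M) by (split; nra). apply Rabs_le. lra.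
Qed.

Lemma ln_lip a b : exp (- M) <= a -> exp (- M) <= b -> Rabs (ln a - ln b) <= exp M * Rabs (a - b).
Proof.
  intros Ha Hb. pose proof (exp_pos (- M)).
  rewrite <- Rabs_Ropp, <- (Rabs_Ropp (a - b)). replace (- (ln a - ln b)) with (ln b - ln a) by ring.
  replace (- (a - b)) with (b - a) by ring.
  apply (lip_of_deriv ln Rinv a b).
  - intros c Hc. apply derivable_pt_lim_ln. unfold betw, Rmin in Hc. destruct (Rle_dec a b); lra.
  - intros c Hc. assert (exp (- M) <= c) by (unfold betw, Rmin in Hc; destruct (Rle_dec a b); lra).
    rewrite Rabs_pos_eq by (left; apply Rinv_0_lt_compat; lra).
    replace (exp M) with (/ exp (- M)) by (rewrite exp_Ropp, Rinv_inv; auto).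
    apply Rinv_le_contravar; auto.
Qed.

Lemma osc_omega r lam0 mu eps : 0 < r -> 0 < lam0 < 1 -> 0 < mu < 1 ->
  (forall u v, mu * lam0 * r <= u <= r -> mu * lam0 * r <= v <= r -> Rabs (alpha' u - alpha' v) <= eps) ->
  forall t tau, lam0 * r <= t <= r -> lam0 * r <= tau <= r ->
  Rabs (exponent alpha t - exponent alpha tau) <= exp M * (3 * eps + 4 * mu * exp M).
Proof.
  intros Hr Hl Hm Hosc t tau Ht Htau.
  assert (Hl0 : 0 < lam0 * r) by nra. assert (Hmul : mu * lam0 * r <= lam0 * r) by nra.
  destruct (key_est mu t Hm ltac:(lra)) as [x1 [Hx1 E1]].
  destruct (key_est mu tau Hm ltac:(lra)) as [x2 [Hx2 E2]].
  assert (B1 : Rabs (alpha' x1 - alpha' t) <= eps) by (apply Hosc; nra).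
  assert (B2 : Rabs (alpha' x2 - alpha' tau) <= eps) by (apply Hosc; nra).
  assert (B3 : Rabs (alpha' t - alpha' tau) <= eps) by (apply Hosc; nra).
  unfold exponent. pose proof (ratio_bounds t ltac:(lra)) as [R1 _]. pose proof (ratio_bounds tau ltac:(lra)) as [R2 _].
  eapply Rle_trans; [apply ln_lip; auto|]. apply Rmult_le_compat_l. left; apply exp_pos.
  replace (alpha t / t - alpha tau / tau) with
    ((alpha t / t - alpha' t) + (alpha' t - alpha' tau) - (alpha tau / tau - alpha' tau)) by ring.
  eapply Rle_trans; [apply Rabs_triang|]. rewrite Rabs_Ropp.
  eapply Rle_trans; [apply Rplus_le_compat_r; apply Rabs_triang|]. lra.
Qed.
End Omega.

Lemma omega_SO alpha : SOS alpha -> exists M, 0 <= M /\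
  (forall t, 0 < t -> Rabs (exponent alpha t) <= M) /\ SO (fun s => RtoC (exponent alpha s)).
Proof.
  intros [Hpos [[beta [Hb1 [Hb2 Hb3]]] [Hnf [alpha' [Hd [[M HM] [Hcont HSO]]]]]]].
  destruct HSO as [_ [_ [SO0 SOI]]].
  exists M. pose proof (M_nonneg alpha' M HM) as HM0. split; auto.
  pose proof (omega_bound alpha alpha' beta M Hpos Hb1 Hd HM) as Hbnd. split; auto.
  set (e := exp M). assert (He : 0 < e) by apply exp_pos.
  assert (Hmain : forall lam0 eps, 0 < lam0 < 1 -> 0 < eps ->
     exists mu eps', 0 < mu < 1 /\ 0 < eps' /\ 0 < mu * lam0 < 1 /\ e * (3 * eps' + 4 * mu * e) <= eps).
  { intros lam0 eps Hl He0. exists (Rmin (1/2) (eps / (8 * e * e))), (eps / (6 * e)).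
    assert (0 < eps / (8 * e * e)) by (apply Rdiv_lt_0_compat; nra).
    assert (0 < Rmin (1/2) (eps / (8 * e * e))) by (apply Rmin_pos; lra).
    pose proof (Rmin_l (1/2) (eps / (8 * e * e))). pose proof (Rmin_r (1/2) (eps / (8 * e * e))).
    split; [lra|]. split; [apply Rdiv_lt_0_compat; lra|]. split; [split; nra|].
    assert (e * (4 * Rmin (1/2) (eps / (8 * e * e)) * e) <= e * (4 * (eps / (8 * e * e)) * e)).
    { apply Rmult_le_compat_l; [lra|]. apply Rmult_le_compat_r; lra. }
    replace (e * (4 * (eps / (8 * e * e)) * e)) with (eps / 2) in H3 by (field; lra).
    replace (e * (3 * (eps / (6 * e)) + 4 * Rmin (1 / 2) (eps / (8 * e * e)) * e)) with
      (eps / 2 + e * (4 * Rmin (1 / 2) (eps / (8 * e * e)) * e)) by (field; lra). lra. }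
  repeat split.
  - exists M. intros t Ht. rewrite Cmod_R. auto.
  - intros t Ht eps Heps. destruct (omega_deriv alpha alpha' beta M Hpos Hb1 Hd HM t Ht) as [l Hl].
    destruct (deriv_eps _ _ _ Hl eps Heps) as [d [Hd0 Hdd]]. exists d; split; auto.
    intros s Hs Hst. rewrite Cmod_RtoC_minus. auto.
  - intros lam0 Hl eps Heps. destruct (Hmain lam0 eps Hl Heps) as [mu [eps' [Hmu [He' [Hml Hfin]]]]].
    destruct (SO0 (mu * lam0) Hml eps' He') as [d [Hd0 Hdd]]. exists d; split; auto.
    intros r Hr t tau Ht Htau. rewrite Cmod_RtoC_minus.
    eapply Rle_trans; [|exact Hfin].
    apply (osc_omega alpha alpha' beta M Hpos Hb1 Hd HM r lam0 mu eps'); auto; try lra.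
    intros u v Hu Hv. pose proof (Hdd r Hr u v Hu Hv) as X. cbv beta in X. rewrite Cmod_RtoC_minus in X. auto.
  - intros lam0 Hl eps Heps. destruct (Hmain lam0 eps Hl Heps) as [mu [eps' [Hmu [He' [Hml Hfin]]]]].
    destruct (SOI (mu * lam0) Hml eps' He') as [N HN]. exists (Rmax N 0).
    intros r Hr t tau Ht Htau. rewrite Cmod_RtoC_minus.
    assert (Hr0 : 0 < r) by (pose proof (Rmax_r N 0); lra).
    assert (HrN : N < r) by (pose proof (Rmax_l N 0); lra).
    eapply Rle_trans; [|exact Hfin].
    apply (osc_omega alpha alpha' beta M Hpos Hb1 Hd HM r lam0 mu eps'); auto; try lra.
    intros u v Hu Hv. pose proof (HN r HrN u v Hu Hv) as X. cbv beta in X. rewrite Cmod_RtoC_minus in X. auto.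
Qed.

Lemma SO_lip (g k : R -> C) L : SO g -> 0 <= L -> bounded_on_Rp k ->
  (forall s t, 0 < s -> 0 < t -> Cmod (k s - k t)%C <= L * Cmod (g s - g t)%C) -> SO k.
Proof.
  intros [_ [Gc [G0 GI]]] HL Hb Hk.
  assert (Hfac : forall eps x, 0 < eps -> x <= eps / (L + 1) -> L * x <= eps).
  { intros eps x He Hx. assert (0 < L + 1) by lra.
    assert (L * (eps / (L + 1)) <= eps).
    { apply (Rmult_le_reg_r (L + 1)); auto. replace (L * (eps / (L + 1)) * (L + 1)) with (L * eps) by (field; lra). nra. }
    destruct (Rle_dec 0 x). nra. nra. }
  assert (Hfac2 : forall eps x, 0 < eps -> x < eps / (L + 1) -> L * x < eps).
  { intros eps x He Hx. assert (0 < L + 1) by lra.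
    assert (L * (eps / (L + 1)) < eps).
    { apply (Rmult_lt_reg_r (L + 1)); auto. replace (L * (eps / (L + 1)) * (L + 1)) with (L * eps) by (field; lra). nra. }
    destruct (Rle_dec 0 x). nra. nra. }
  assert (Hep : forall eps, 0 < eps -> 0 < eps / (L + 1)) by (intros; apply Rdiv_lt_0_compat; lra).
  split; [auto|]. split; [|split].
  - intros t Ht eps He. destruct (Gc t Ht (eps / (L + 1)) (Hep eps He)) as [d [Hd Hdd]].
    exists d; split; auto. intros s Hs Hst. eapply Rle_lt_trans; [apply Hk; auto|]. apply Hfac2; auto.
  - intros lam Hl eps He. destruct (G0 lam Hl (eps / (L + 1)) (Hep eps He)) as [d [Hd Hdd]].
    exists d; split; auto. intros r Hr t tau Ht Htau.
    assert (0 < t) by nra. assert (0 < tau) by nra.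
    eapply Rle_trans; [apply Hk; auto|]. apply Hfac; auto. apply (Hdd r); auto.
  - intros lam1 Hl1 eps He. destruct (GI lam1 Hl1 (eps / (L + 1)) (Hep eps He)) as [N HN].
    exists (Rmax N 0). intros r Hr t tau Ht Htau.
    assert (0 < r) by (pose proof (Rmax_r N 0); lra). assert (N < r) by (pose proof (Rmax_l N 0); lra).
    assert (0 < t) by nra. assert (0 < tau) by nra.
    eapply Rle_trans; [apply Hk; auto|]. apply Hfac; auto. apply (HN r); auto.
Qed.

Lemma SO_const (c : C) : SO (fun _ => c).
Proof.
  assert (Hz : forall a : C, Cmod (a - a)%C = 0) by (intros a; replace (a - a)%C with (RtoC 0) by ring; apply Cmod_0).
  split; [exists (Cmod c); intros; lra|]. split; [|split].
  - intros t Ht eps He. exists 1. split; [lra|]. intros. rewrite Hz. auto.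
  - intros lam Hl eps He. exists 1. split; [lra|]. intros. rewrite Hz. lra.
  - intros lam Hl eps He. exists 0. intros. rewrite Hz. lra.
Qed.

Lemma SO_ext (f g : R -> C) : SO f -> (forall t, 0 < t -> f t = g t) -> SO g.
Proof.
  intros Hf E. apply (SO_lip f g 1 Hf); [lra| |].
  - destruct Hf as [[M HM] _]. exists M. intros t Ht. rewrite <- E; auto.
  - intros s t Hs Ht. rewrite <- (E s), <- (E t); auto. lra.
Qed.

Lemma SO_shift (f : R -> C) (c : C) : SO f -> SO (fun t => f t + c)%C.
Proof.
  intros Hf. apply (SO_lip f _ 1 Hf); [lra| |].
  - destruct Hf as [[M HM] _]. exists (M + Cmod c). intros t Ht.
    eapply Rle_trans; [apply Cmod_triangle|]. specialize (HM t Ht). lra.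
  - intros s t _ _. replace (f s + c - (f t + c))%C with (f s - f t)%C by ring. lra.
Qed.

Lemma SO_inv (g : R -> C) b : SO g -> 0 < b -> (forall t, 0 < t -> b <= Cmod (g t)) ->
  SO (fun t => / g t)%C.
Proof.
  intros Hg Hb Hl.
  assert (Hnz : forall t, 0 < t -> g t <> 0%C).
  { intros t Ht E. specialize (Hl t Ht). rewrite E, Cmod_0 in Hl. lra. }
  apply (SO_lip g _ (/ (b * b)) Hg). left; apply Rinv_0_lt_compat; nra.
  - exists (/ b). intros t Ht. rewrite Cmod_inv by auto. apply Rinv_le_contravar; auto.
  - intros s t Hs Ht.
    replace (/ g s - / g t)%C with ((g t - g s) * / g s * / g t)%C by (field; split; auto).
    rewrite !Cmod_mult, !Cmod_inv by auto.
    replace (Cmod (g t - g s)%C) with (Cmod (g s - g t)%C)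
      by (rewrite <- Cmod_opp; f_equal; ring).
    pose proof (Hl s Hs); pose proof (Hl t Ht). pose proof (Cmod_ge_0 (g s - g t)%C).
    assert (/ Cmod (g s) * / Cmod (g t) <= / (b * b)).
    { rewrite <- Rinv_mult. apply Rinv_le_contravar. nra. apply Rmult_le_compat; lra. }
    rewrite Rmult_assoc. rewrite (Rmult_comm (Cmod (g s - g t)%C)).
    apply Rmult_le_compat_r; auto.
Qed.

Lemma Xi_real (Xi : (R -> C) -> C) (f : R -> C) : character Xi -> SO f ->
  (forall t, snd (f t) = 0) -> Xi f = RtoC (fst (Xi f)).
Proof.
  intros [Hext [Hadd [Hsc [Hmul [f0 [Hf0 Hnz]]]]]] Hf Hreal.
  set (w := Xi f).
  assert (X1 : Xi (fun _ => 1%C) = 1%C).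
  { pose proof (Hmul (fun _ => 1%C) f0 (SO_const 1%C) Hf0) as E. cbv beta in E.
    replace (fun t => (1 * f0 t)%C) with f0 in E by (apply functional_extensionality; intros; ring).
    assert (E2 : (Xi (fun _ => 1%C) * Xi f0)%C = (1 * Xi f0)%C) by (rewrite <- E; ring).
    replace (Xi (fun _ => 1%C)) with (Xi (fun _ => 1%C) * Xi f0 * / Xi f0)%C by (field; auto).
    rewrite E2. field; auto. }
  destruct (Req_dec (snd w) 0) as [Hb|Hb].
  { destruct w as [a b] eqn:Ew. simpl in *. subst b. unfold RtoC. reflexivity. }
  exfalso.
  set (h := fun t => (f t + (- w) * 1)%C).
  assert (Hh : SO h) by (apply SO_shift; auto).
  assert (Xh : Xi h = 0%C).
  { unfold h. rewrite Hadd; auto. 2: apply SO_const.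
    rewrite (Hsc (- w)%C (fun _ => 1%C)) by apply SO_const. rewrite X1. fold w. ring. }
  assert (Hlow : forall t, 0 < t -> Rabs (snd w) <= Cmod (h t)).
  { intros t Ht. eapply Rle_trans; [|apply Rmax_Cmod]. eapply Rle_trans; [|apply Rmax_r].
    unfold h. simpl. rewrite Hreal. right. rewrite <- Rabs_Ropp. f_equal. ring. }
  assert (Hginv : SO (fun t => / h t)%C).
  { apply (SO_inv h (Rabs (snd w))); auto. apply Rabs_pos_lt; auto. }
  assert (Hhnz : forall t, 0 < t -> h t <> 0%C).
  { intros t Ht E. specialize (Hlow t Ht). rewrite E, Cmod_0 in Hlow. pose proof (Rabs_pos_lt _ Hb). lra. }
  assert (Hprod : SO (fun t => h t * / h t)%C).
  { apply (SO_ext (fun _ => 1%C)). apply SO_const. intros t Ht. field. auto. }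
  pose proof (Hmul h (fun t => / h t)%C Hh Hginv) as E. cbv beta in E.
  rewrite (Hext (fun t => h t * / h t)%C (fun _ => 1%C) Hprod (SO_const 1%C)) in E.
  2:{ intros t Ht. field. auto. }
  rewrite X1, Xh in E. assert (E3 := f_equal fst E). simpl in E3. lra.
Qed.

Lemma CompOK_mono U V W K B B' : CompOK U V W K B -> B <= B' -> CompOK U V W K B'.
Proof.
  intros [h1 [h2 [h3 [h4 [h5 [h6 h7]]]]]] HB.
  assert (Hw : forall x, B / (1 + x^2) <= B' / (1 + x^2)).
  { intros. unfold Rdiv. apply Rmult_le_compat_r; auto. left; apply inv1x2_pos. }
  repeat split; auto.
  - intros. eapply Rle_trans; [apply h3; auto|]. lra.
  - intros. eapply Rle_trans; [apply h4; auto|]. auto.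
  - intros. eapply Rle_trans; [apply h5; auto|]. auto.
  - intros. eapply Rle_trans; [apply h6; auto|]. apply Rmult_le_compat_r; auto. apply Rabs_pos.
  - intros. eapply Rle_trans; [apply h7; auto|]. unfold Rdiv. apply Rmult_le_compat_r. left; apply inv1x2_pos.
    apply Rmult_le_compat_r; auto. apply Rabs_pos.
Qed.

Lemma Vnorm_mono f A A' : Vnorm_le f A -> A <= A' -> Vnorm_le f A'.
Proof. intros H HA x l Hl. specialize (H x l Hl). lra. Qed.

Lemma a_as_J p x s : a_fun p (RtoC s) x = (Jc p PJ s x * rf p x)%C.
Proof.
  unfold a_fun, Jc, PJ, Bf, Ef. change (r_p p x) with (rf p x). unfold Zc. ring.
Qed.

Theorem lemma7p4 (p : R) (alpha : R -> R) (Xi : (R -> C) -> C) :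
  1 < p -> SOS alpha -> in_Delta Xi ->
  exists b : R -> R -> C, E_V b /\
    forall t x, 0 < t ->
      (a_fun p (RtoC (exponent alpha t)) x
         - a_fun p (Xi (fun s => RtoC (exponent alpha s))) x)%C
      = ((RtoC (exponent alpha t) - Xi (fun s => RtoC (exponent alpha s)))
           * r_p p x * b t x)%C.
Proof.
  intros hp HS [Hchar _].
  destruct (omega_SO alpha HS) as [M [HM0 [Hbnd HSO]]].
  set (om := fun s => RtoC (exponent alpha s)) in *.
  pose proof (Xi_real Xi om Hchar HSO (fun t => eq_refl)) as HXr.
  set (w0 := fst (Xi om)) in *.
  set (K := Rmax M (Rabs w0)).
  assert (HK : 0 <= K) by (unfold K; pose proof (Rmax_l M (Rabs w0)); lra).
  assert (Hw0 : Rabs w0 <= K) by apply Rmax_r.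
  assert (HomK : forall t, 0 < t -> Rabs (exponent alpha t) <= K).
  { intros t Ht. pose proof (Hbnd t Ht). pose proof (Rmax_l M (Rabs w0)). unfold K; lra. }
  destruct (Fam_pr p hp K HK fst (or_introl eq_refl)) as [B1 HF1].
  destruct (Fam_pr p hp K HK snd (or_intror eq_refl)) as [B2 HF2].
  pose proof (Fam_Comp _ _ _ _ _ _ _ _ K B1 w0 Hw0 HF1) as HC1.
  pose proof (Fam_Comp _ _ _ _ _ _ _ _ K B2 w0 Hw0 HF2) as HC2.
  pose proof (B_nonneg _ _ _ K B1 HC1 HK) as HB1. pose proof (B_nonneg _ _ _ K B2 HC2 HK) as HB2.
  set (B := B1 + B2).
  assert (HC1' := CompOK_mono _ _ _ K B1 B HC1 ltac:(unfold B; lra)).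
  assert (HC2' := CompOK_mono _ _ _ K B2 B HC2 ltac:(unfold B; lra)).
  clear HC1 HC2. cbv beta in HC1', HC2'.
  set (U1 := fun s x => DDr w0 (fun t => fst (Jc p PJ t x)) (fun t => fst (Jc p (PJs p) t x)) s) in *.
  set (U2 := fun s x => DDr w0 (fun t => snd (Jc p PJ t x)) (fun t => snd (Jc p (PJs p) t x)) s) in *.
  set (V1 := fun s x => DDr w0 (fun t => fst (Jc p (PJx p) t x)) (fun t => fst (Jc p (PJsx p) t x)) s) in *.
  set (V2 := fun s x => DDr w0 (fun t => snd (Jc p (PJx p) t x)) (fun t => snd (Jc p (PJsx p) t x)) s) in *.
  set (W1 := fun s x => DDr w0 (fun t => fst (Jc p (PJxx p) t x)) (fun t => fst (Jc p (PJsxx p) t x)) s) in *.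
  set (W2 := fun s x => DDr w0 (fun t => snd (Jc p (PJxx p) t x)) (fun t => snd (Jc p (PJsxx p) t x)) s) in *.
  assert (HB : 0 <= B) by (unfold B; lra).
  exists (fun t x => pairf U1 U2 (exponent alpha t) x).
  split.
  2:{ intros t x Ht. rewrite HXr. rewrite !a_as_J. change (r_p p x) with (rf p x).
      set (s := exponent alpha t).
      assert (Hb : ((RtoC s - RtoC w0) * pairf U1 U2 s x)%C = (Jc p PJ s x - Jc p PJ w0 x)%C).
      { unfold pairf, U1, U2, DDr. destruct (Req_EM_T s w0) as [E|E].
        - subst s. rewrite E. ring.
        - destruct (Jc p PJ s x) as [a1 b1]. destruct (Jc p PJ w0 x) as [a2 b2].
          apply injective_projections; simpl; field; lra. }
      transitivity (((RtoC s - RtoC w0) * pairf U1 U2 s x) * rf p x)%C.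
      - rewrite Hb. ring.
      - ring. }
  destruct HSO as [_ [Hcont [HS0 HSI]]].
  assert (Hcm : forall a b, Cmod (om a - om b)%C = Rabs (exponent alpha a - exponent alpha b)).
  { intros. unfold om. apply Cmod_RtoC_minus. }
  split; [split; [split; [|split]|split]|].
  - intros t Ht. apply (Good_inV _ (2 * B) (2 * B)); [|lra]. apply (pair_G1 U1 V1 W1 U2 V2 W2 K B); auto.
  - exists (2 * B + 2 * B * PI). intros t Ht. apply (Good_Vnorm _ (2 * B) (2 * B)); [|lra].
    apply (pair_G1 U1 V1 W1 U2 V2 W2 K B); auto.
  - intros t Ht eps He.
    set (c := 2 * B + 2 * B * PI + 1).
    assert (Hc : 0 < c) by (unfold c; pose proof PI_RGT_0; nra).
    destruct (Hcont t Ht (eps / c) ltac:(apply Rdiv_lt_0_compat; lra)) as [d [Hd Hdd]].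
    exists (Rmin d t). split. apply Rmin_pos; lra.
    intros tau Htau Htd.
    assert (Hd1 : Rabs (tau - t) < d) by (pose proof (Rmin_l d t); lra).
    specialize (Hdd tau Htau Hd1). rewrite Hcm in Hdd.
    eapply Vnorm_mono.
    + apply (Good_Vnorm _ (2 * (B * Rabs (exponent alpha tau - exponent alpha t))) (2 * (B * Rabs (exponent alpha tau - exponent alpha t)))).
      apply (pair_G2 U1 V1 W1 U2 V2 W2 K B); auto.
      pose proof (Rabs_pos (exponent alpha tau - exponent alpha t)). nra.
    + set (D := Rabs (exponent alpha tau - exponent alpha t)) in *.
      assert (0 <= D) by apply Rabs_pos.
      assert (D * c <= eps).
      { apply Rlt_le. apply (Rmult_lt_reg_r (/ c)). apply Rinv_0_lt_compat; auto.
        rewrite Rmult_assoc, Rinv_r by lra. rewrite Rmult_1_r. exact Hdd. }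
      unfold c in *. pose proof PI_RGT_0. nra.
  - intros eps He.
    set (c := 2 * B + 1).
    destruct (HS0 (1/2) ltac:(lra) (eps / c) ltac:(apply Rdiv_lt_0_compat; unfold c; lra)) as [d [Hd Hdd]].
    exists (d / 2). split. lra.
    intros r Hr t tau Ht Htau x.
    assert (Hrr : 0 < 2 * r < d) by lra.
    assert (X := Hdd (2 * r) Hrr t tau ltac:(lra) ltac:(lra)). rewrite Hcm in X.
    assert (Ht0 : 0 < t) by lra. assert (Htau0 : 0 < tau) by lra.
    eapply Rle_trans; [apply (pair_sup U1 V1 W1 U2 V2 W2 K B); auto|].
    assert (Rabs (exponent alpha t - exponent alpha tau) * c <= eps).
    { apply (Rmult_le_reg_r (/ c)). apply Rinv_0_lt_compat; unfold c; lra.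
      rewrite Rmult_assoc, Rinv_r by (unfold c; lra). rewrite Rmult_1_r. exact X. }
    pose proof (Rabs_pos (exponent alpha t - exponent alpha tau)). unfold c in *. nra.
  - intros eps He.
    set (c := 2 * B + 1).
    destruct (HSI (1/2) ltac:(lra) (eps / c) ltac:(apply Rdiv_lt_0_compat; unfold c; lra)) as [N HN].
    exists (Rmax N 0).
    intros r Hr t tau Ht Htau x.
    assert (Hr0 : 0 < r) by (pose proof (Rmax_r N 0); lra).
    assert (Hrr : N < 2 * r) by (pose proof (Rmax_l N 0); lra).
    assert (X := HN (2 * r) Hrr t tau ltac:(lra) ltac:(lra)). rewrite Hcm in X.
    assert (Ht0 : 0 < t) by lra. assert (Htau0 : 0 < tau) by lra.
    eapply Rle_trans; [apply (pair_sup U1 V1 W1 U2 V2 W2 K B); auto|].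
    assert (Rabs (exponent alpha t - exponent alpha tau) * c <= eps).
    { apply (Rmult_le_reg_r (/ c)). apply Rinv_0_lt_compat; unfold c; lra.
      rewrite Rmult_assoc, Rinv_r by (unfold c; lra). rewrite Rmult_1_r. exact X. }
    pose proof (Rabs_pos (exponent alpha t - exponent alpha tau)). unfold c in *. nra.
  - intros eps He.
    set (c := 2 * B + 2 * (3 * B) * PI + 1).
    assert (Hc : 0 < c) by (unfold c; pose proof PI_RGT_0; nra).
    exists (Rmin 1 (eps / c)). split. apply Rmin_pos; [lra|apply Rdiv_lt_0_compat; lra].
    intros h Hh t Ht.
    assert (Hh1 : Rabs h <= 1) by (pose proof (Rmin_l 1 (eps / c)); lra).
    assert (Hh2 : Rabs h < eps / c) by (pose proof (Rmin_r 1 (eps / c)); lra).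
    eapply Vnorm_mono.
    + apply (Good_Vnorm _ (2 * (B * Rabs h)) (2 * (3 * B * Rabs h))).
      apply (pair_G3 U1 V1 W1 U2 V2 W2 K B); auto.
      pose proof (Rabs_pos h). nra.
    + assert (0 <= Rabs h) by apply Rabs_pos.
      assert (Rabs h * c <= eps).
      { apply Rlt_le. apply (Rmult_lt_reg_r (/ c)). apply Rinv_0_lt_compat; auto.
        rewrite Rmult_assoc, Rinv_r by lra. rewrite Rmult_1_r. exact Hh2. }
      unfold c in *. pose proof PI_RGT_0. nra.
Qed.
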